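(* Let $X=X(s)$ be a strictly convex $C^{(3)}$ curve in the plane $\mathbb{R}^2$, parametrized by arclength. The following are equivalent: (1) there are functions $\lambda(s)$ and $\mu(s)$ such that for all $s$ and all sufficiently small $h_1,h_2$ (with $X(s),X(s+h_1),X(s+h_2)$ distinct), $U(s,h_1,h_2)=\lambda(s)\,T(s,h_1,h_2)^{\mu(s)}$; (2) for all $s$ and all sufficiently small $h_1,h_2$ (with the three points distinct), $U(s,h_1,h_2)=\frac12 T(s,h_1,h_2)$; (3) $X$ is an open part of a parabola.
   Context: A regular plane curve $X$ defined on an open interval is convex if for every point of $X$ the trace of $X$ lies entirely in one closed half-plane determined by the tangent line at that point. A simple convex curve $X$ is strictly convex if it is of class $C^{(3)}$ and has positive curvature with respect to the unit normal pointing to the convex side. For three distinct points $A=X(s)$, $A_i=X(s+h_i)$ ($i=1,2$) on $X$, let $\ell,\ell_1,\ell_2$ be the tangent lines of $X$ at $A,A_1,A_2$, and let $B=\ell_1\cap\ell_2$, $B_1=\ell\cap\ell_1$, $B_2=\ell\cap\ell_2$. Define $T(s,h_1,h_2)=|\triangle AA_1A_2|$ and $U(s,h_1,h_2)=|\triangle BB_1B_2|$ (areas). *)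

(* Defs.v *)
From Stdlib Require Import Reals.
From Coquelicot Require Import Coquelicot.
Open Scope R_scope.

Definition pt := (R * R)%type.
Definition psub (p q : pt) : pt := (fst p - fst q, snd p - snd q).
Definition cross (p q : pt) : R := fst p * snd q - snd p * fst q.
Definition tri_area (A B C : pt) : R := Rabs (cross (psub B A) (psub C A)) / 2.
(** Intersection point of the lines P + t d and Q + u e (meaningful when
    cross d e <> 0). *)
Definition line_inter (P d Q e : pt) : pt :=
  let t := cross (psub Q P) e / cross d e in
  (fst P + t * fst d, snd P + t * snd d).

Definition in_I (a b : Rbar) (t : R) : Prop := Rbar_lt a t /\ Rbar_lt t b.

Definition Xp (x y : R -> R) (s : R) : pt := (x s, y s).
Definition Tan (x y : R -> R) (s : R) : pt := (Derive x s, Derive y s).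
Definition kappa (x y : R -> R) (s : R) : R :=
  Derive x s * Derive_n y 2 s - Derive y s * Derive_n x 2 s.

Definition C3_on (a b : Rbar) (f : R -> R) : Prop :=
  forall t, in_I a b t ->
    (forall k, (k <= 3)%nat -> ex_derive_n f k t) /\ continuous (Derive_n f 3) t.

Definition arclength_param (a b : Rbar) (x y : R -> R) : Prop :=
  forall t, in_I a b t -> (Derive x t) ^ 2 + (Derive y t) ^ 2 = 1.

Definition simple_curve (a b : Rbar) (x y : R -> R) : Prop :=
  forall s t, in_I a b s -> in_I a b t -> Xp x y s = Xp x y t -> s = t.

(** Convex: at every point the trace lies in one closed half-plane bounded by
    the tangent line at that point. *)
Definition convex_curve (a b : Rbar) (x y : R -> R) : Prop :=
  forall s, in_I a b s ->
    (forall t, in_I a b t -> 0 <= cross (Tan x y s) (psub (Xp x y t) (Xp x y s))) \/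
    (forall t, in_I a b t -> cross (Tan x y s) (psub (Xp x y t) (Xp x y s)) <= 0).

(** Strictly convex: simple, convex, C^3, and positive curvature with respect
    to the unit normal eps*(-y',x') (eps = +-1) pointing to the convex side,
    i.e. X''.(eps*N) = eps*kappa > 0. *)
Definition strictly_convex (a b : Rbar) (x y : R -> R) : Prop :=
  C3_on a b x /\ C3_on a b y /\ simple_curve a b x y /\ convex_curve a b x y /\
  forall s, in_I a b s -> exists eps : R, (eps = 1 \/ eps = -1) /\
    (forall t, in_I a b t ->
        0 <= eps * cross (Tan x y s) (psub (Xp x y t) (Xp x y s))) /\
    0 < eps * kappa x y s.

Definition Tarea (x y : R -> R) (s h1 h2 : R) : R :=
  tri_area (Xp x y s) (Xp x y (s + h1)) (Xp x y (s + h2)).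

Definition Uarea (x y : R -> R) (s h1 h2 : R) : R :=
  let B  := line_inter (Xp x y (s + h1)) (Tan x y (s + h1))
                       (Xp x y (s + h2)) (Tan x y (s + h2)) in
  let B1 := line_inter (Xp x y s) (Tan x y s) (Xp x y (s + h1)) (Tan x y (s + h1)) in
  let B2 := line_inter (Xp x y s) (Tan x y s) (Xp x y (s + h2)) (Tan x y (s + h2)) in
  tri_area B B1 B2.

Definition for_small_h (a b : Rbar) (x y : R -> R) (s : R) (P : R -> R -> Prop) : Prop :=
  exists delta : R, 0 < delta /\
    forall h1 h2, Rabs h1 < delta -> Rabs h2 < delta ->
      in_I a b (s + h1) -> in_I a b (s + h2) ->
      Xp x y s <> Xp x y (s + h1) -> Xp x y s <> Xp x y (s + h2) ->
      Xp x y (s + h1) <> Xp x y (s + h2) ->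
      P h1 h2.

(** Parabola: { c + t e1 + t^2 e2 | t in R } with e1, e2 linearly independent
    (this is exactly the class of affine images of y = x^2, i.e. all parabolas). *)
Definition on_parabola (c e1 e2 : pt) (p : pt) : Prop :=
  exists t : R, p = (fst c + t * fst e1 + t ^ 2 * fst e2,
                     snd c + t * snd e1 + t ^ 2 * snd e2).

Definition open_part_of_parabola (a b : Rbar) (x y : R -> R) : Prop :=
  exists c e1 e2 : pt, cross e1 e2 <> 0 /\
    forall s, in_I a b s -> on_parabola c e1 e2 (Xp x y s).

(* Main.v *)
Require Import Defs.
From Stdlib Require Import Reals Lra Lia Psatz Classical.
From Coquelicot Require Import Coquelicot.
Open Scope R_scope.

Ltac feed H := repeat match type of H with
  | ?A -> _ => let h := fresh in assert (h : A) by (assumption || auto); specialize (H h); clear h end.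

Lemma open_I (a b : Rbar) t : in_I a b t ->
  exists r, 0 < r /\ forall t', Rabs (t' - t) < r -> in_I a b t'.
Proof.
  intros [Ha Hb].
  destruct a as [a| |]; destruct b as [b| |]; simpl in *; try contradiction.
  - exists (Rmin (t - a) (b - t)). split. apply Rmin_pos; lra.
    intros t' H. pose proof (Rmin_l (t-a) (b-t)). pose proof (Rmin_r (t-a) (b-t)).
    apply Rabs_def2 in H. split; simpl; lra.
  - exists (t - a). split. lra. intros t' H. apply Rabs_def2 in H. split; simpl; lra.
  - exists (b - t). split. lra. intros t' H. apply Rabs_def2 in H. split; simpl; lra.
  - exists 1. split. lra. intros t' H. split; simpl; auto.
Qed.

Lemma minmax_abs h z : Rmin 0 h <= z <= Rmax 0 h -> Rabs z <= Rabs h.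
Proof.
  intros Hz. destruct (Rle_lt_dec 0 h).
  - rewrite Rmin_left, Rmax_right in Hz by lra. rewrite !Rabs_right; lra.
  - rewrite Rmin_right, Rmax_left in Hz by lra. rewrite !Rabs_left1; lra.
Qed.

Definition oN (g : R -> R) (n : nat) : Prop :=
  forall eps, 0 < eps -> exists d, 0 < d /\ forall h, Rabs h < d -> Rabs (g h) <= eps * Rabs h ^ n.

Lemma little_o_step (g dg : R -> R) n r : 0 < r -> g 0 = 0 ->
  (forall h, Rabs h < r -> is_derive g h (dg h)) -> oN dg n -> oN g (S n).
Proof.
  intros Hr Hg0 Hd Ho eps Heps.
  destruct (Ho eps Heps) as [d [Hd0 Hdd]].
  exists (Rmin d r). split. apply Rmin_pos; lra.
  intros h Hh. pose proof (Rmin_l d r). pose proof (Rmin_r d r).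
  destruct (MVT_gen g 0 h dg) as [c [Hc Hgc]].
  - intros z Hz. apply Hd. 
    assert (Rmin 0 h <= z <= Rmax 0 h) by lra.
    pose proof (minmax_abs h z H1). lra.
  - intros z Hz. apply continuity_pt_filterlim. apply (ex_derive_continuous g).
    exists (dg z). apply Hd.
    pose proof (minmax_abs h z Hz). lra.
  - assert (Hch : Rabs c <= Rabs h).
    { apply minmax_abs; auto. }
    rewrite Hg0, Rminus_0_r, Rminus_0_r in Hgc. rewrite Hgc, Rabs_mult.
    assert (H1 : Rabs (dg c) <= eps * Rabs c ^ n) by (apply Hdd; lra).
    simpl. 
    assert (0 <= Rabs c ^ n) by (apply pow_le; apply Rabs_pos).
    assert (Rabs c ^ n <= Rabs h ^ n) by (apply pow_incr; split; [apply Rabs_pos|lra]).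
    assert (0 <= Rabs h) by apply Rabs_pos.
    apply Rle_trans with (eps * Rabs c ^ n * Rabs h).
    apply Rmult_le_compat_r; auto.
    replace (eps * (Rabs h * Rabs h ^ n)) with (eps * Rabs h ^ n * Rabs h) by ring.
    apply Rmult_le_compat_r; auto. apply Rmult_le_compat_l; lra.
Qed.

Lemma oN_of_derive (f : R -> R) s l :
  is_derive f s l -> oN (fun h => f (s + h) - f s - h * l) 1.
Proof.
  intros H eps Heps. apply is_derive_Reals in H.
  destruct (H eps Heps) as [d Hd].
  exists d. split. apply cond_pos. intros h Hh.
  destruct (Req_dec h 0) as [->|Hh0].
  - rewrite Rplus_0_r. simpl. rewrite Rabs_R0. replace (f s - f s - 0 * l) with 0 by ring.
    rewrite Rabs_R0. lra.
  - specialize (Hd h Hh0 Hh).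
    replace (f (s + h) - f s - h * l) with (((f (s + h) - f s) / h - l) * h) by (field; auto).
    rewrite Rabs_mult. simpl. rewrite Rmult_1_r. apply Rmult_le_compat_r. apply Rabs_pos. lra.
Qed.

Lemma shift_derive (f : R -> R) s h : ex_derive f (s + h) ->
  is_derive (fun t => f (s + t)) h (Derive f (s + h)).
Proof.
  intros H.
  assert (H1 : is_derive (fun t => s + t) h 1) by (auto_derive; auto; ring).
  pose proof (is_derive_comp f (fun t => s + t) h _ _ (Derive_correct _ _ H) H1) as H2.
  replace (Derive f (s + h)) with (scal 1 (Derive f (s + h))). exact H2.
  unfold scal; simpl; unfold mult; simpl; ring.
Qed.

Lemma oN_lim g n : oN g n -> is_lim (fun h => g h / h ^ n) 0 0.
Proof.
  intros H. apply is_lim_spec. intros eps.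
  destruct (H (eps/2)) as [d [Hd Hdd]]. generalize (cond_pos eps); lra.
  exists (mkposreal d Hd). intros h Hb Hne. unfold ball in Hb; simpl in Hb.
  unfold AbsRing_ball, abs, minus, plus, opp in Hb; simpl in Hb.
  rewrite Ropp_0, Rplus_0_r in Hb.
  specialize (Hdd h Hb). rewrite Rminus_0_r.
  assert (Hp : 0 < Rabs h ^ n). apply pow_lt. apply Rabs_pos_lt; auto.
  unfold Rdiv. rewrite Rabs_mult, Rabs_inv, <- RPow_abs.
  apply Rle_lt_trans with (eps/2). 
  apply (Rmult_le_reg_r (Rabs h ^ n)); auto. rewrite Rmult_assoc, Rinv_l; lra.
  generalize (cond_pos eps); lra.
Qed.

Definition lim0 (f : R -> R) (l : R) := is_lim f 0 l.

Lemma lim_c c : lim0 (fun _ => c) c.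
Proof. apply is_lim_const. Qed.
Lemma lim_id : lim0 (fun h => h) 0.
Proof. apply (is_lim_id 0). Qed.
Lemma lim_plus f g a b : lim0 f a -> lim0 g b -> lim0 (fun h => f h + g h) (a + b).
Proof. intros. apply (is_lim_plus' f g 0 a b); auto. Qed.
Lemma lim_opp f a : lim0 f a -> lim0 (fun h => - f h) (- a).
Proof. intros. apply (is_lim_opp f 0 a); auto. Qed.
Lemma lim_minus f g a b : lim0 f a -> lim0 g b -> lim0 (fun h => f h - g h) (a - b).
Proof. intros. apply (is_lim_minus' f g 0 a b); auto. Qed.
Lemma lim_mult f g a b : lim0 f a -> lim0 g b -> lim0 (fun h => f h * g h) (a * b).
Proof. intros. apply (is_lim_mult f g 0 a b); auto; exact I. Qed.
Lemma lim_inv f a : lim0 f a -> a <> 0 -> lim0 (fun h => / f h) (/ a).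
Proof. intros. apply (is_lim_inv f 0 a); auto. intro E; injection E; auto. Qed.
Lemma lim_div f g a b : lim0 f a -> lim0 g b -> b <> 0 -> lim0 (fun h => f h / g h) (a / b).
Proof. intros. unfold Rdiv. apply lim_mult; auto. apply lim_inv; auto. Qed.
Lemma lim_abs f a : lim0 f a -> lim0 (fun h => Rabs (f h)) (Rabs a).
Proof. intros H. apply (is_lim_comp_continuous f Rabs 0 a H). apply continuous_Rabs. Qed.
Lemma lim_pow f a n : lim0 f a -> lim0 (fun h => f h ^ n) (a ^ n).
Proof. intros H. induction n; simpl. apply lim_c. apply lim_mult; auto. Qed.
Lemma lim_ext f g l : (forall h, h <> 0 -> f h = g h) -> lim0 f l -> lim0 g l.
Proof.
  intros E H. apply (is_lim_ext_loc f g 0 l); auto. exists (mkposreal 1 Rlt_0_1).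
  intros y _ Hy. auto.
Qed.
Lemma lim_ext_loc f g l d : 0 < d -> (forall h, h <> 0 -> Rabs h < d -> f h = g h) -> lim0 f l -> lim0 g l.
Proof.
  intros Hd E H. apply (is_lim_ext_loc f g 0 l); auto. exists (mkposreal d Hd).
  intros y Hb Hy. apply E; auto. unfold ball in Hb; simpl in Hb.
  unfold AbsRing_ball, abs, minus, plus, opp in Hb; simpl in Hb.
  rewrite Ropp_0, Rplus_0_r in Hb. auto.
Qed.

Lemma lim_eps f l : lim0 f l -> forall eps, 0 < eps ->
  exists d, 0 < d /\ forall h, h <> 0 -> Rabs h < d -> Rabs (f h - l) < eps.
Proof.
  intros H eps Heps. apply is_lim_spec in H. destruct (H (mkposreal eps Heps)) as [d Hd].
  exists d. split. apply cond_pos. intros h Hh Hb. apply Hd; auto.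
  unfold ball; simpl. unfold AbsRing_ball, abs, minus, plus, opp; simpl.
  rewrite Ropp_0, Rplus_0_r. auto.
Qed.

Lemma lim_of_eps f l : (forall eps, 0 < eps ->
  exists d, 0 < d /\ forall h, h <> 0 -> Rabs h < d -> Rabs (f h - l) < eps) -> lim0 f l.
Proof.
  intros H. apply is_lim_spec. intros eps. destruct (H eps (cond_pos eps)) as [d [Hd Hdd]].
  exists (mkposreal d Hd). intros h Hb Hh. apply Hdd; auto.
  unfold ball in Hb; simpl in Hb.
  unfold AbsRing_ball, abs, minus, plus, opp in Hb; simpl in Hb.
  rewrite Ropp_0, Rplus_0_r in Hb. auto.
Qed.

Lemma lim_pos f l : lim0 f l -> 0 < l -> exists d, 0 < d /\ forall h, h <> 0 -> Rabs h < d -> 0 < f h.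
Proof.
  intros H Hl. destruct (lim_eps f l H (l/2)) as [d [Hd Hdd]]. lra.
  exists d. split; auto. intros h H1 H2. specialize (Hdd h H1 H2). apply Rabs_def2 in Hdd. lra.
Qed.

Lemma lim_neg f l : lim0 f l -> l < 0 -> exists d, 0 < d /\ forall h, h <> 0 -> Rabs h < d -> f h < 0.
Proof.
  intros H Hl. destruct (lim_eps f l H (-l/2)) as [d [Hd Hdd]]. lra.
  exists d. split; auto. intros h H1 H2. specialize (Hdd h H1 H2). apply Rabs_def2 in Hdd. lra.
Qed.

Lemma lim_sign f l : lim0 f l -> l <> 0 -> exists d, 0 < d /\ forall h, h <> 0 -> Rabs h < d -> 0 < f h * l.
Proof.
  intros H Hl. destruct (Rlt_dec 0 l).
  - destruct (lim_pos f l H r) as [d [Hd Hdd]]. exists d; split; auto. intros. 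
    specialize (Hdd h H0 H1). nra.
  - destruct (lim_neg f l H) as [d [Hd Hdd]]. lra. exists d; split; auto. intros. 
    specialize (Hdd h H0 H1). nra.
Qed.

Lemma lim_const_right f c l e : 0 < e -> (forall h, 0 < h < e -> f h = c) -> lim0 f l -> c = l.
Proof.
  intros He Hc H. destruct (Req_dec c l) as [|Hne]; auto. exfalso.
  destruct (lim_eps f l H (Rabs (c - l))) as [d [Hd Hdd]]. apply Rabs_pos_lt; lra.
  set (h := Rmin d e / 2). assert (0 < Rmin d e) by (apply Rmin_pos; lra).
  pose proof (Rmin_l d e). pose proof (Rmin_r d e).
  specialize (Hdd h). rewrite Hc in Hdd. 
  assert (Rabs h < d) by (unfold h; rewrite Rabs_right; lra). 
  assert (h <> 0) by (unfold h; lra). lra. unfold h; lra.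
Qed.

Lemma lim_const_left f c l e : 0 < e -> (forall h, - e < h < 0 -> f h = c) -> lim0 f l -> c = l.
Proof.
  intros He Hc H. destruct (Req_dec c l) as [|Hne]; auto. exfalso.
  destruct (lim_eps f l H (Rabs (c - l))) as [d [Hd Hdd]]. apply Rabs_pos_lt; lra.
  set (h := - (Rmin d e / 2)). assert (0 < Rmin d e) by (apply Rmin_pos; lra).
  pose proof (Rmin_l d e). pose proof (Rmin_r d e).
  specialize (Hdd h). rewrite Hc in Hdd. 
  assert (Rabs h < d) by (unfold h; rewrite Rabs_left; lra). 
  assert (h <> 0) by (unfold h; lra). lra. unfold h; lra.
Qed.

Lemma lim_unique0 f a b : lim0 f a -> lim0 f b -> a = b.
Proof.
  intros Ha Hb. apply is_lim_unique in Ha. apply is_lim_unique in Hb. rewrite Ha in Hb.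
  injection Hb; auto.
Qed.

Lemma lim_comp_half f l : lim0 f l -> lim0 (fun h => f (h / 2)) l.
Proof.
  intros H. apply lim_of_eps. intros eps Heps. destruct (lim_eps f l H eps Heps) as [d [Hd Hdd]].
  exists d. split; auto. intros h Hh Hb. apply Hdd. lra.
  unfold Rdiv. rewrite Rabs_mult, Rabs_inv, (Rabs_right 2) by lra. lra.
Qed.

Definition D2 (f : R -> R) := Derive (Derive f).
Definition D3 (f : R -> R) := Derive (Derive (Derive f)).

Lemma taylor3 (f : R -> R) (s r0 : R) : 0 < r0 ->
  (forall t, Rabs (t - s) < r0 -> ex_derive f t /\ ex_derive (Derive f) t /\ ex_derive (D2 f) t) ->
  oN (fun h => f (s + h) - f s - h * Derive f s - h ^ 2 / 2 * D2 f s - h ^ 3 / 6 * D3 f s) 3 /\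
  oN (fun h => Derive f (s + h) - Derive f s - h * D2 f s - h ^ 2 / 2 * D3 f s) 2 /\
  oN (fun h => D2 f (s + h) - D2 f s - h * D3 f s) 1.
Proof.
  intros Hr H.
  assert (Hs : forall h, Rabs h < r0 -> ex_derive f (s + h) /\ ex_derive (Derive f) (s + h) /\ ex_derive (D2 f) (s + h)).
  { intros h Hh. apply H. replace (s + h - s) with h by ring. auto. }
  assert (O1 : oN (fun h => D2 f (s + h) - D2 f s - h * D3 f s) 1).
  { apply oN_of_derive. apply Derive_correct. destruct (Hs 0) as [_ [_ Hx]]. rewrite Rabs_R0; auto.
    rewrite Rplus_0_r in Hx; exact Hx. }
  assert (O2 : oN (fun h => Derive f (s + h) - Derive f s - h * D2 f s - h ^ 2 / 2 * D3 f s) 2).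
  { apply (little_o_step _ (fun h => D2 f (s + h) - D2 f s - h * D3 f s) 1 r0); auto.
    - cbv beta; rewrite Rplus_0_r; field.
    - intros h Hh. destruct (Hs h Hh) as [_ [H2 _]].
      auto_derive. 
      + repeat split; auto.
      + unfold D2; change (fun x : R => Derive f x) with (Derive f); change (fun x : R => f x) with f; simpl; field. }
  split; [|split; auto].
  apply (little_o_step _ (fun h => Derive f (s + h) - Derive f s - h * D2 f s - h ^ 2 / 2 * D3 f s) 2 r0); auto.
  - cbv beta; rewrite Rplus_0_r; field.
  - intros h Hh. destruct (Hs h Hh) as [H1 _].
    auto_derive. 
    + repeat split; auto.
    + unfold D2; change (fun x : R => Derive f x) with (Derive f); change (fun x : R => f x) with f; simpl; field.
Qed.

Definition uu (x y : R -> R) s h := Derive x s * (x (s+h) - x s) + Derive y s * (y (s+h) - y s).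
Definition vv (x y : R -> R) s h := Derive x s * (y (s+h) - y s) - Derive y s * (x (s+h) - x s).
Definition uu1 (x y : R -> R) s h := Derive x s * Derive x (s+h) + Derive y s * Derive y (s+h).
Definition vv1 (x y : R -> R) s h := Derive x s * Derive y (s+h) - Derive y s * Derive x (s+h).
Definition uu2 (x y : R -> R) s h := Derive x s * D2 x (s+h) + Derive y s * D2 y (s+h).
Definition vv2 (x y : R -> R) s h := Derive x s * D2 y (s+h) - Derive y s * D2 x (s+h).
Definition WW (x y : R -> R) s h := uu x y s h * vv1 x y s h - vv x y s h * uu1 x y s h.
Definition kap (x y : R -> R) t := Derive x t * D2 y t - Derive y t * D2 x t.
Definition KK1 (x y : R -> R) s h := vv1 x y s h ^ 2 * vv x y s h / (4 * WW x y s h ^ 2).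
Definition KK2 (x y : R -> R) s h :=
  vv1 x y s h * (uu x y s h * vv1 x y s h - 2 * vv x y s h * uu1 x y s h) / (4 * WW x y s h ^ 2).
Definition RR (x y : R -> R) s h :=
  vv x y s h ^ 2 * Rabs (kap x y (s + h)) / (vv1 x y s h ^ 2 * Rabs (WW x y s h)).
Definition L2 (x y : R -> R) s :=
  (Derive x s * D3 y s - Derive y s * D3 x s) / (6 * kap x y s).

Lemma kappa_kap x y t : kappa x y t = kap x y t.
Proof. reflexivity. Qed.

Lemma lim_shift (f : R -> R) s : ex_derive f s -> lim0 (fun h => f (s + h)) (f s).
Proof.
  intros H. pose proof (ex_derive_continuous f s H) as C.
  apply (is_lim_comp_continuous (fun h => s + h) f 0 s); auto.
  pose proof (is_lim_plus' (fun _ => s) (fun h => h) 0 s 0 (is_lim_const s 0) (is_lim_id 0)) as L.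
  rewrite Rplus_0_r in L. exact L.
Qed.

Lemma ball_abs (s r t : R) : ball s r t -> Rabs (t - s) < r.
Proof. unfold ball; simpl. unfold AbsRing_ball, abs, minus, plus, opp; simpl. auto. Qed.

Lemma abs_ball (s : R) (r : posreal) (t : R) : Rabs (t - s) < r -> ball s r t.
Proof. unfold ball; simpl. unfold AbsRing_ball, abs, minus, plus, opp; simpl. auto. Qed.

Lemma arcl_deriv (x y : R -> R) s r0 : 0 < r0 ->
  (forall t, Rabs (t - s) < r0 -> ex_derive x t /\ ex_derive (Derive x) t) ->
  (forall t, Rabs (t - s) < r0 -> ex_derive y t /\ ex_derive (Derive y) t) ->
  (forall t, Rabs (t - s) < r0 -> Derive x t ^ 2 + Derive y t ^ 2 = 1) ->
  Derive x s * D2 x s + Derive y s * D2 y s = 0.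
Proof.
  intros Hr Hx Hy Ha.
  assert (E : locally s (fun t => (fun _ => 1) t = (fun t => Derive x t ^ 2 + Derive y t ^ 2) t)).
  { exists (mkposreal r0 Hr). intros t Ht. cbv beta. symmetry. apply Ha. apply ball_abs; auto. }
  pose proof (Derive_ext_loc _ _ _ E) as E2. rewrite Derive_const in E2.
  assert (D : is_derive (fun t => Derive x t ^ 2 + Derive y t ^ 2) s
             (2 * Derive x s * D2 x s + 2 * Derive y s * D2 y s)).
  { destruct (Hx s) as [_ Hx2]. rewrite Rminus_eq_0, Rabs_R0; auto.
    destruct (Hy s) as [_ Hy2]. rewrite Rminus_eq_0, Rabs_R0; auto.
    auto_derive. repeat split; auto. unfold D2. match goal with |- ?a = ?b => change (@eq R a b) end. change (fun x0 : R => Derive x x0) with (Derive x). change (fun x0 : R => Derive y x0) with (Derive y). ring. }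
  assert (D' : Derive (fun t : R => Derive x t ^ 2 + Derive y t ^ 2) s =
             2 * Derive x s * D2 x s + 2 * Derive y s * D2 y s) by (apply is_derive_unique; exact D).
  rewrite D' in E2. lra.
Qed.

Lemma lim_lin2 g1 g2 n c1 c2 c : oN g1 n -> oN g2 n ->
  lim0 (fun h => c1 * (g1 h / h ^ n) + c2 * (g2 h / h ^ n) + c) c.
Proof.
  intros H1 H2.
  pose proof (lim_plus _ _ _ _ (lim_plus _ _ _ _ (lim_mult _ _ _ _ (lim_c c1) (oN_lim _ _ H1))
    (lim_mult _ _ _ _ (lim_c c2) (oN_lim _ _ H2))) (lim_c c)) as L.
  replace (c1 * 0 + c2 * 0 + c) with c in L by ring. exact L.
Qed.

Lemma lim_val f a b : lim0 f a -> a = b -> lim0 f b.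
Proof. intros H ->; auto. Qed.

Section Local.
Variables (x y : R -> R) (s r0 : R).
Hypothesis Hr0 : 0 < r0.
Hypothesis Hdx : forall t, Rabs (t - s) < r0 -> ex_derive x t /\ ex_derive (Derive x) t /\ ex_derive (D2 x) t.
Hypothesis Hdy : forall t, Rabs (t - s) < r0 -> ex_derive y t /\ ex_derive (Derive y) t /\ ex_derive (D2 y) t.
Hypothesis Hal : forall t, Rabs (t - s) < r0 -> Derive x t ^ 2 + Derive y t ^ 2 = 1.
Hypothesis Hk : kap x y s <> 0.

Definition A1 h := (vv x y s h - kap x y s * h ^ 2 / 2) / h ^ 3.
Definition A2 h := (vv1 x y s h - kap x y s * h) / h ^ 2.
Definition A3 h := (uu x y s h - h * (Derive x s ^ 2 + Derive y s ^ 2) - h ^ 2 / 2 * (Derive x s * D2 x s + Derive y s * D2 y s)) / h ^ 3.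
Definition A4 h := (uu1 x y s h - (Derive x s ^ 2 + Derive y s ^ 2) - h * (Derive x s * D2 x s + Derive y s * D2 y s)) / h ^ 2.
Definition v3 := Derive x s * D3 y s - Derive y s * D3 x s.
Definition u3 := Derive x s * D3 x s + Derive y s * D3 y s.

Lemma al0 : Derive x s ^ 2 + Derive y s ^ 2 = 1.
Proof. apply Hal. rewrite Rminus_eq_0, Rabs_R0; auto. Qed.

Lemma al1 : Derive x s * D2 x s + Derive y s * D2 y s = 0.
Proof.
  apply (arcl_deriv x y s r0); auto.
  intros t Ht; destruct (Hdx t Ht) as [? [? ?]]; auto.
  intros t Ht; destruct (Hdy t Ht) as [? [? ?]]; auto.
Qed.

Lemma TX : oN (fun h => x (s + h) - x s - h * Derive x s - h ^ 2 / 2 * D2 x s - h ^ 3 / 6 * D3 x s) 3 /\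
  oN (fun h => Derive x (s + h) - Derive x s - h * D2 x s - h ^ 2 / 2 * D3 x s) 2 /\
  oN (fun h => D2 x (s + h) - D2 x s - h * D3 x s) 1.
Proof. apply taylor3 with r0; auto. Qed.
Lemma TY : oN (fun h => y (s + h) - y s - h * Derive y s - h ^ 2 / 2 * D2 y s - h ^ 3 / 6 * D3 y s) 3 /\
  oN (fun h => Derive y (s + h) - Derive y s - h * D2 y s - h ^ 2 / 2 * D3 y s) 2 /\
  oN (fun h => D2 y (s + h) - D2 y s - h * D3 y s) 1.
Proof. apply taylor3 with r0; auto. Qed.

Lemma lim_A1 : lim0 A1 (v3 / 6).
Proof.
  destruct TX as [X3 _]. destruct TY as [Y3 _].
  eapply lim_ext; [|apply (lim_lin2 _ _ 3 (Derive x s) (- Derive y s) (v3/6) Y3 X3)].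
  intros h Hh. unfold A1, vv, v3, kap. field. auto.
Qed.

Lemma lim_A2 : lim0 A2 (v3 / 2).
Proof.
  destruct TX as [_ [X2 _]]. destruct TY as [_ [Y2 _]].
  eapply lim_ext; [|apply (lim_lin2 _ _ 2 (Derive x s) (- Derive y s) (v3/2) Y2 X2)].
  intros h Hh. unfold A2, vv1, v3, kap. field. auto.
Qed.

Lemma lim_A3 : lim0 A3 (u3 / 6).
Proof.
  destruct TX as [X3 _]. destruct TY as [Y3 _].
  eapply lim_ext; [|apply (lim_lin2 _ _ 3 (Derive x s) (Derive y s) (u3/6) X3 Y3)].
  intros h Hh. unfold A3, uu, u3. field. auto.
Qed.

Lemma lim_A4 : lim0 A4 (u3 / 2).
Proof.
  destruct TX as [_ [X2 _]]. destruct TY as [_ [Y2 _]].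
  eapply lim_ext; [|apply (lim_lin2 _ _ 2 (Derive x s) (Derive y s) (u3/2) X2 Y2)].
  intros h Hh. unfold A4, uu1, u3. field. auto.
Qed.

Lemma lim_kap : lim0 (fun h => kap x y (s + h)) (kap x y s).
Proof.
  unfold kap. 
  destruct (Hdx s) as [_ [Hx1 Hx2]]. rewrite Rminus_eq_0, Rabs_R0; auto.
  destruct (Hdy s) as [_ [Hy1 Hy2]]. rewrite Rminus_eq_0, Rabs_R0; auto.
  apply lim_minus; apply lim_mult; apply lim_shift; auto.
Qed.


Definition k0 := kap x y s.
Definition ww h := (1 + h ^ 2 * A3 h) * (k0 + h * A2 h) - (k0 / 2 + h * A1 h) * (1 + h ^ 2 * A4 h).
Definition nn h := (A2 h - 2 * A1 h) + h * k0 * A3 h + h ^ 2 * A2 h * A3 h - h * k0 * A4 h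
   - 2 * h ^ 2 * A1 h * A4 h.

Lemma eq_v h : h <> 0 -> vv x y s h = h ^ 2 * (k0 / 2 + h * A1 h).
Proof. intros. unfold A1, k0. field. auto. Qed.
Lemma eq_v1 h : h <> 0 -> vv1 x y s h = h * (k0 + h * A2 h).
Proof. intros. unfold A2, k0. field. auto. Qed.
Lemma eq_u h : h <> 0 -> uu x y s h = h * (1 + h ^ 2 * A3 h).
Proof.
  intros. assert (E : uu x y s h = h * (Derive x s ^ 2 + Derive y s ^ 2) +
    h ^ 2 / 2 * (Derive x s * D2 x s + Derive y s * D2 y s) + h ^ 3 * A3 h).
  { unfold A3. field. auto. }
  rewrite E, al0, al1. ring.
Qed.
Lemma eq_u1 h : h <> 0 -> uu1 x y s h = 1 + h ^ 2 * A4 h.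
Proof.
  intros. assert (E : uu1 x y s h = (Derive x s ^ 2 + Derive y s ^ 2) +
    h * (Derive x s * D2 x s + Derive y s * D2 y s) + h ^ 2 * A4 h).
  { unfold A4. field. auto. }
  rewrite E, al0, al1. ring.
Qed.

Lemma eq_W h : h <> 0 -> WW x y s h = h ^ 2 * ww h.
Proof. intros. unfold WW, ww. rewrite eq_v, eq_v1, eq_u, eq_u1; auto. field. Qed.
Lemma eq_N h : h <> 0 ->
  uu x y s h * vv1 x y s h - 2 * vv x y s h * uu1 x y s h = h ^ 3 * nn h.
Proof. intros. unfold nn. rewrite eq_v, eq_v1, eq_u, eq_u1; auto. field. Qed.

Ltac limtac := repeat (first [ apply lim_A1 | apply lim_A2 | apply lim_A3 | apply lim_A4 | apply lim_kap
  | apply lim_minus | apply lim_plus | apply lim_opp | apply lim_mult | apply lim_pow | apply lim_id | apply lim_c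
  | apply lim_abs ]).

Lemma lim_ww : lim0 ww (k0 / 2).
Proof. unfold ww. eapply lim_val. limtac. unfold k0, kap. field. Qed.
Lemma lim_nn : lim0 nn (v3 / 6).
Proof. unfold nn. eapply lim_val. limtac. field. Qed.

Ltac limtac2 := repeat (first [ apply lim_ww | apply lim_nn | apply lim_A1 | apply lim_A2 | apply lim_A3 | apply lim_A4 | apply lim_kap
  | apply lim_minus | apply lim_plus | apply lim_opp | apply lim_mult | apply lim_pow | apply lim_id | apply lim_c
  | apply lim_abs ]).

Lemma lim_e1 : lim0 (fun h => k0 / 2 + h * A1 h) (k0 / 2).
Proof. eapply lim_val. limtac. unfold k0, kap; field. Qed.
Lemma lim_e2 : lim0 (fun h => k0 + h * A2 h) k0.
Proof. eapply lim_val. limtac. unfold k0, kap; field. Qed.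
Lemma lim_e3 : lim0 (fun h => 1 + h ^ 2 * A4 h) 1.
Proof. eapply lim_val. limtac. unfold k0, kap; field. Qed.
Lemma lim_e4 : lim0 (fun h => ww h * kap x y (s + h)) (k0 / 2 * k0).
Proof. apply lim_mult. apply lim_ww. apply lim_kap. Qed.

Lemma local_nz : exists e, 0 < e /\ forall h, h <> 0 -> Rabs h < e ->
  k0 / 2 + h * A1 h <> 0 /\ k0 + h * A2 h <> 0 /\ ww h <> 0 /\ 0 < ww h * kap x y (s + h) /\ 0 < 1 + h ^ 2 * A4 h /\ kap x y (s + h) <> 0.
Proof.
  assert (k0 <> 0) by exact Hk.
  destruct (lim_sign _ _ lim_e1) as [d1 [D1 H1]]. lra.
  destruct (lim_sign _ _ lim_e2) as [d2 [D2 H2]]. lra.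
  destruct (lim_sign _ _ lim_ww) as [d3 [D3 H3]]. lra.
  destruct (lim_pos _ _ lim_e4) as [d4 [D4 H4]]. nra.
  destruct (lim_pos _ _ lim_e3) as [d5 [D5 H5]]. lra.
  destruct (lim_sign _ _ lim_kap) as [d6 [D6 H6]]. exact Hk.
  exists (Rmin d1 (Rmin d2 (Rmin d3 (Rmin d4 (Rmin d5 d6))))).
  split. repeat apply Rmin_pos; auto.
  intros h Hh Hb.
  pose proof (Rmin_l d1 (Rmin d2 (Rmin d3 (Rmin d4 (Rmin d5 d6))))).
  pose proof (Rmin_r d1 (Rmin d2 (Rmin d3 (Rmin d4 (Rmin d5 d6))))).
  pose proof (Rmin_l d2 (Rmin d3 (Rmin d4 (Rmin d5 d6)))).
  pose proof (Rmin_r d2 (Rmin d3 (Rmin d4 (Rmin d5 d6)))).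
  pose proof (Rmin_l d3 (Rmin d4 (Rmin d5 d6))).
  pose proof (Rmin_r d3 (Rmin d4 (Rmin d5 d6))).
  pose proof (Rmin_l d4 (Rmin d5 d6)). pose proof (Rmin_r d4 (Rmin d5 d6)).
  pose proof (Rmin_l d5 d6). pose proof (Rmin_r d5 d6).
  specialize (H1 h Hh ltac:(lra)). specialize (H2 h Hh ltac:(lra)). specialize (H3 h Hh ltac:(lra)).
  specialize (H4 h Hh ltac:(lra)). specialize (H5 h Hh ltac:(lra)). specialize (H6 h Hh ltac:(lra)).
  split; [|split; [|split; [|split; [|split]]]]; try lra; intro E; rewrite E in *; nra.
Qed.

Lemma k0nz : k0 <> 0.
Proof. exact Hk. Qed.

Lemma lim_K1 : lim0 (KK1 x y s) (k0 / 2).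
Proof.
  destruct local_nz as [e [He Hn]].
  apply (lim_ext_loc (fun h => (k0 + h * A2 h) ^ 2 * (k0 / 2 + h * A1 h) / (4 * ww h ^ 2)) _ _ e He).
  - intros h Hh Hb. destruct (Hn h Hh Hb) as [? [? [? _]]]. unfold KK1.
    rewrite eq_v, eq_v1, eq_W; auto. field. auto.
  - assert (LN : lim0 (fun h => (k0 + h * A2 h) ^ 2 * (k0 / 2 + h * A1 h)) (k0 ^ 2 * (k0 / 2)))
      by (eapply lim_val; [limtac2| unfold k0, kap; field]).
    assert (LD : lim0 (fun h => 4 * ww h ^ 2) (k0 ^ 2))
      by (eapply lim_val; [limtac2| unfold k0, kap; field]).
    eapply lim_val. apply lim_div; [exact LN|exact LD|apply pow_nonzero; exact k0nz].
    pose proof k0nz. field. auto.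
Qed.

Lemma lim_K2 : lim0 (KK2 x y s) (v3 / (6 * k0)).
Proof.
  destruct local_nz as [e [He Hn]].
  apply (lim_ext_loc (fun h => (k0 + h * A2 h) * nn h / (4 * ww h ^ 2)) _ _ e He).
  - intros h Hh Hb. destruct (Hn h Hh Hb) as [? [? [? _]]]. unfold KK2.
    rewrite eq_N, eq_v1, eq_W; auto. field. auto.
  - assert (LN : lim0 (fun h => (k0 + h * A2 h) * nn h) (k0 * (v3 / 6)))
      by (eapply lim_val; [limtac2| unfold k0, kap; field]).
    assert (LD : lim0 (fun h => 4 * ww h ^ 2) (k0 ^ 2))
      by (eapply lim_val; [limtac2| unfold k0, kap; field]).
    eapply lim_val. apply lim_div; [exact LN|exact LD|apply pow_nonzero; exact k0nz].
    pose proof k0nz. field. auto.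
Qed.

Lemma Rabs_half a : Rabs (a / 2) = Rabs a / 2.
Proof. unfold Rdiv. rewrite Rabs_mult, Rabs_inv, (Rabs_right 2); lra. Qed.

Lemma lim_RR : lim0 (RR x y s) (1 / 2).
Proof.
  destruct local_nz as [e [He Hn]].
  apply (lim_ext_loc (fun h => (k0 / 2 + h * A1 h) ^ 2 * Rabs (kap x y (s + h)) / 
     ((k0 + h * A2 h) ^ 2 * Rabs (ww h))) _ _ e He).
  - intros h Hh Hb. destruct (Hn h Hh Hb) as [? [? [? _]]]. unfold RR.
    rewrite eq_v, eq_v1, eq_W; auto. rewrite Rabs_mult, (Rabs_right (h^2)). field.
    split. apply Rabs_no_R0; auto. split; auto. apply Rle_ge, pow2_ge_0.
  - assert (LN : lim0 (fun h => (k0 / 2 + h * A1 h) ^ 2 * Rabs (kap x y (s + h))) ((k0 / 2) ^ 2 * Rabs k0)).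
    { apply lim_mult. apply lim_pow. apply lim_e1. apply lim_abs. apply lim_kap. }
    assert (LD : lim0 (fun h => (k0 + h * A2 h) ^ 2 * Rabs (ww h)) (k0 ^ 2 * (Rabs k0 / 2))).
    { rewrite <- Rabs_half. apply lim_mult. apply lim_pow. apply lim_e2. apply lim_abs. apply lim_ww. }
    pose proof k0nz. assert (Rabs k0 <> 0) by (apply Rabs_no_R0; auto).
    eapply lim_val. apply lim_div; [exact LN|exact LD|].
    apply Rmult_integral_contrapositive; split. apply pow_nonzero; auto. lra.
    field. auto.
Qed.

End Local.

Ltac eta_fix := repeat match goal with |- context [Derive (fun t => ?f t) ?h] =>
  change (Derive (fun t => f t) h) with (Derive f h) end.

Section Deriv.
Variables (x y : R -> R) (s r0 : R).
Hypothesis Hr0 : 0 < r0.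
Hypothesis Hdx : forall t, Rabs (t - s) < r0 -> ex_derive x t /\ ex_derive (Derive x) t /\ ex_derive (D2 x) t.
Hypothesis Hdy : forall t, Rabs (t - s) < r0 -> ex_derive y t /\ ex_derive (Derive y) t /\ ex_derive (D2 y) t.

Lemma hs h : Rabs h < r0 -> Rabs (s + h - s) < r0.
Proof. intros; replace (s + h - s) with h by ring; auto. Qed.

Lemma d_uu h : Rabs h < r0 -> is_derive (uu x y s) h (uu1 x y s h).
Proof.
  intros Hh. destruct (Hdx _ (hs h Hh)) as [H1 _]. destruct (Hdy _ (hs h Hh)) as [H2 _].
  unfold uu, uu1. auto_derive. repeat split; auto.
  change (fun x0 : R => x x0) with x. change (fun x0 : R => y x0) with y. ring.
Qed.
Lemma d_vv h : Rabs h < r0 -> is_derive (vv x y s) h (vv1 x y s h).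
Proof.
  intros Hh. destruct (Hdx _ (hs h Hh)) as [H1 _]. destruct (Hdy _ (hs h Hh)) as [H2 _].
  unfold vv, vv1. auto_derive. repeat split; auto.
  change (fun x0 : R => x x0) with x. change (fun x0 : R => y x0) with y. ring.
Qed.
Lemma d_uu1 h : Rabs h < r0 -> is_derive (uu1 x y s) h (uu2 x y s h).
Proof.
  intros Hh. destruct (Hdx _ (hs h Hh)) as [_ [H1 _]]. destruct (Hdy _ (hs h Hh)) as [_ [H2 _]].
  unfold uu1, uu2, D2. auto_derive. repeat split; auto.
  change (fun x0 : R => Derive x x0) with (Derive x). change (fun x0 : R => Derive y x0) with (Derive y). ring.
Qed.
Lemma d_vv1 h : Rabs h < r0 -> is_derive (vv1 x y s) h (vv2 x y s h).
Proof.
  intros Hh. destruct (Hdx _ (hs h Hh)) as [_ [H1 _]]. destruct (Hdy _ (hs h Hh)) as [_ [H2 _]].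
  unfold vv1, vv2, D2. auto_derive. repeat split; auto.
  change (fun x0 : R => Derive x x0) with (Derive x). change (fun x0 : R => Derive y x0) with (Derive y). ring.
Qed.

Lemma d_K1 h : Rabs h < r0 -> WW x y s h <> 0 ->
  is_derive (KK1 x y s) h
   (- vv1 x y s h * (2 * vv x y s h ^ 2 * (uu1 x y s h * vv2 x y s h - vv1 x y s h * uu2 x y s h)
       - vv1 x y s h ^ 2 * WW x y s h) / (4 * WW x y s h ^ 3)).
Proof.
  intros Hh HW.
  pose proof (d_uu h Hh) as D1. pose proof (d_vv h Hh) as D2. 
  pose proof (d_uu1 h Hh) as D3. pose proof (d_vv1 h Hh) as D4.
  unfold KK1, WW. unfold WW in HW. auto_derive.
  - repeat split; try (eexists; eauto). intro E. apply HW. nra.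
  - eta_fix. rewrite (is_derive_unique _ _ _ D1), (is_derive_unique _ _ _ D2),
      (is_derive_unique _ _ _ D3), (is_derive_unique _ _ _ D4).
    field. auto.
Qed.

Definition NN h := uu x y s h * vv1 x y s h - 2 * vv x y s h * uu1 x y s h.
Definition EE h := 2 * vv x y s h ^ 2 * (uu1 x y s h * vv2 x y s h - vv1 x y s h * uu2 x y s h)
       - vv1 x y s h ^ 2 * WW x y s h.

Lemma d_K2 h : Rabs h < r0 -> WW x y s h <> 0 -> vv x y s h <> 0 -> uu1 x y s h <> 0 ->
  is_derive (KK2 x y s) h
   ((NN h * WW x y s h + uu x y s h * vv1 x y s h * WW x y s h - 2 * uu x y s h * vv1 x y s h * NN h)
     * EE h / (2 * vv x y s h ^ 2 * uu1 x y s h * (4 * WW x y s h ^ 3))).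
Proof.
  intros Hh HW Hv Hu.
  pose proof (d_uu h Hh) as D1. pose proof (d_vv h Hh) as D2. 
  pose proof (d_uu1 h Hh) as D3. pose proof (d_vv1 h Hh) as D4.
  unfold KK2, NN, EE, WW. unfold WW in HW. auto_derive.
  - repeat split; try (eexists; eauto). intro E. apply HW. nra.
  - eta_fix. rewrite (is_derive_unique _ _ _ D1), (is_derive_unique _ _ _ D2),
      (is_derive_unique _ _ _ D3), (is_derive_unique _ _ _ D4).
    field. auto.
Qed.

End Deriv.

Lemma const_on (f : R -> R) a b : (forall z, a < z < b -> is_derive f z 0) ->
  forall z1 z2, a < z1 < b -> a < z2 < b -> f z1 = f z2.
Proof.
  intros Hd z1 z2 H1 H2.
  destruct (MVT_gen f z1 z2 (fun _ => 0)) as [c [Hc E]].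
  - intros z Hz. apply Hd. split.
    apply Rle_lt_trans with (Rmin z1 z2). apply Rmin_glb; lra. lra.
    apply Rlt_le_trans with (Rmax z1 z2). lra. apply Rmax_lub; lra.
  - intros z Hz. apply continuity_pt_filterlim. apply (ex_derive_continuous f).
    exists 0. apply Hd. split.
    apply Rlt_le_trans with (Rmin z1 z2). apply Rmin_glb_lt; lra. lra.
    apply Rle_lt_trans with (Rmax z1 z2). lra. apply Rmax_lub_lt; lra.
  - lra.
Qed.

Lemma pos_prod_pos a b : 0 < a * b -> 0 < b -> 0 < a.
Proof. intros H Hb. destruct (Rlt_or_le 0 a); auto. assert (a * b <= 0) by (apply Rmult_le_0_r; lra). lra. Qed.
Lemma pos_prod_neg a b : 0 < a * b -> b < 0 -> a < 0.
Proof. intros H Hb. destruct (Rlt_or_le a 0); auto. assert (a * b <= 0) by (apply Rmult_le_0_l; lra). lra. Qed.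

Section Par.
Variables (x y : R -> R) (s r0 : R).
Hypothesis Hr0 : 0 < r0.
Hypothesis Hdx : forall t, Rabs (t - s) < r0 -> ex_derive x t /\ ex_derive (Derive x) t /\ ex_derive (D2 x) t.
Hypothesis Hdy : forall t, Rabs (t - s) < r0 -> ex_derive y t /\ ex_derive (Derive y) t /\ ex_derive (D2 y) t.
Hypothesis Hal : forall t, Rabs (t - s) < r0 -> Derive x t ^ 2 + Derive y t ^ 2 = 1.
Hypothesis Hk : kap x y s <> 0.
Hypothesis HO : exists e, 0 < e /\ forall h, h <> 0 -> Rabs h < e -> RR x y s h = 1 / 2.

Lemma kap_uv h : kap x y (s + h) = uu1 x y s h * vv2 x y s h - vv1 x y s h * uu2 x y s h.
Proof.
  pose proof (al0 x y s r0 Hr0 Hal) as A.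
  unfold kap, uu1, vv1, uu2, vv2.
  transitivity ((Derive x s ^ 2 + Derive y s ^ 2) *
    (Derive x (s + h) * D2 y (s + h) - Derive y (s + h) * D2 x (s + h))).
  rewrite A; ring. ring.
Qed.


Lemma sgnE : exists e, 0 < e /\ forall h, h <> 0 -> Rabs h < e ->
  EE x y s h = 0 /\ WW x y s h <> 0 /\ vv x y s h <> 0 /\ uu1 x y s h <> 0 /\ vv1 x y s h <> 0 /\ Rabs h < r0.
Proof.
  pose proof (local_nz x y s r0) as LN. feed LN. destruct LN as [e1 [E1 N1]].
  destruct HO as [e2 [E2 O2]].
  exists (Rmin e1 (Rmin e2 r0)). split. repeat apply Rmin_pos; auto.
  intros h Hh Hb.
  pose proof (Rmin_l e1 (Rmin e2 r0)). pose proof (Rmin_r e1 (Rmin e2 r0)).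
  pose proof (Rmin_l e2 r0). pose proof (Rmin_r e2 r0).
  destruct (N1 h Hh ltac:(lra)) as [n1 [n2 [n3 [n4 [n5 n6]]]]].
  specialize (O2 h Hh ltac:(lra)).
  assert (hh : 0 < h ^ 2) by (pose proof (Rsqr_pos_lt h Hh); unfold Rsqr in *; nra).
  pose proof (eq_W x y s r0) as eW. feed eW. specialize (eW h Hh).
  pose proof (eq_v x y s h Hh) as eV. pose proof (eq_v1 x y s h Hh) as eV1.
  pose proof (eq_u1 x y s r0) as eU1. feed eU1. specialize (eU1 h Hh).
  assert (W0 : 0 < WW x y s h * kap x y (s + h)) by (rewrite eW; nra).
  assert (v0 : vv x y s h <> 0) by (rewrite eV; apply Rmult_integral_contrapositive; split; lra).
  assert (v10 : vv1 x y s h <> 0) by (rewrite eV1; apply Rmult_integral_contrapositive; split; lra).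
  assert (u10 : uu1 x y s h <> 0) by (rewrite eU1; lra).
  assert (Wn : WW x y s h <> 0) by (intro E; rewrite E in W0; lra).
  split; [|repeat split; auto; lra].
  unfold RR in O2. unfold EE. rewrite <- kap_uv.
  assert (E2' : 2 * (vv x y s h ^ 2 * Rabs (kap x y (s + h))) = vv1 x y s h ^ 2 * Rabs (WW x y s h)).
  { assert (0 < vv1 x y s h ^ 2 * Rabs (WW x y s h)).
    { apply Rmult_lt_0_compat. pose proof (Rsqr_pos_lt _ v10); unfold Rsqr in *; nra.
      apply Rabs_pos_lt; auto. }
    apply (Rmult_eq_reg_r (/ (vv1 x y s h ^ 2 * Rabs (WW x y s h)))).
    rewrite Rinv_r by lra. unfold Rdiv in O2. rewrite Rmult_assoc, O2. field.
    apply Rinv_neq_0_compat; lra. }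
  destruct (Rlt_dec 0 (kap x y (s + h))).
  - assert (0 < WW x y s h) by (apply (pos_prod_pos _ _ W0); auto).
    rewrite (Rabs_right (kap x y (s + h))), (Rabs_right (WW x y s h)) in E2' by lra. lra.
  - assert (kap x y (s + h) < 0).
    { destruct (Rle_lt_or_eq_dec _ _ (Rnot_lt_le _ _ n)); auto. exfalso; apply n6; auto. }
    assert (WW x y s h < 0) by (apply (pos_prod_neg _ _ W0); auto).
    rewrite (Rabs_left (kap x y (s + h))), (Rabs_left (WW x y s h)) in E2' by lra. lra.
Qed.

Lemma dK_zero : exists e, 0 < e /\ forall z, z <> 0 -> Rabs z < e ->
  is_derive (KK1 x y s) z 0 /\ is_derive (KK2 x y s) z 0.
Proof.
  destruct sgnE as [e [He H]]. exists e. split; auto. intros z Hz Hb.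
  destruct (H z Hz Hb) as [E0 [W0 [V0 [U0 [V10 Hr]]]]].
  split.
  - pose proof (d_K1 x y s r0) as D. feed D. specialize (D z Hr W0).
    unfold EE in E0. rewrite E0 in D. replace (- vv1 x y s z * 0 / (4 * WW x y s z ^ 3)) with 0 in D.
    exact D. field. auto.
  - pose proof (d_K2 x y s r0) as D. feed D. specialize (D z Hr W0 V0 U0).
    rewrite E0 in D. 
    match type of D with is_derive _ _ ?v => replace v with 0 in D end. exact D.
    field. repeat split; auto.
Qed.

Lemma K_const : exists e, 0 < e /\ forall h, h <> 0 -> Rabs h < e ->
  KK1 x y s h = k0 x y s / 2 /\ KK2 x y s h = v3 x y s / (6 * k0 x y s) /\ WW x y s h <> 0 /\ Rabs h < r0.
Proof.
  destruct dK_zero as [e [He H]]. destruct sgnE as [e' [He' H']].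
  pose proof (Rmin_l e e'). pose proof (Rmin_r e e').
  set (e2 := Rmin e e') in *. assert (He2 : 0 < e2) by (apply Rmin_pos; auto).
  assert (R1 : forall f, (forall z, z <> 0 -> Rabs z < e -> is_derive f z 0) ->
     forall z, 0 < z < e2 -> f z = f (e2 / 2)).
  { intros f Hf z Hz. apply (const_on f 0 e2); try lra. intros w Hw. apply Hf. lra.
    rewrite Rabs_right by lra. lra. }
  assert (R2 : forall f, (forall z, z <> 0 -> Rabs z < e -> is_derive f z 0) ->
     forall z, - e2 < z < 0 -> f z = f (- (e2 / 2))).
  { intros f Hf z Hz. apply (const_on f (- e2) 0); try lra. intros w Hw. apply Hf. lra.
    rewrite Rabs_left by lra. lra. }
  pose proof (lim_K1 x y s r0) as L1. feed L1.
  pose proof (lim_K2 x y s r0) as L2. feed L2.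
  assert (F1 : forall z, z <> 0 -> Rabs z < e -> is_derive (KK1 x y s) z 0) by (intros; apply H; auto).
  assert (F2 : forall z, z <> 0 -> Rabs z < e -> is_derive (KK2 x y s) z 0) by (intros; apply H; auto).
  assert (C1 := lim_const_right _ _ _ e2 He2 (R1 _ F1) L1).
  assert (C2 := lim_const_right _ _ _ e2 He2 (R1 _ F2) L2).
  assert (C3 := lim_const_left _ _ _ e2 He2 (R2 _ F1) L1).
  assert (C4 := lim_const_left _ _ _ e2 He2 (R2 _ F2) L2).
  exists e2. split; auto. intros h Hh Hb.
  destruct (H' h Hh ltac:(lra)) as [_ [W0 [_ [_ [_ Hr]]]]].
  destruct (Rlt_dec 0 h).
  - assert (Rabs h = h) by (apply Rabs_right; lra).
    rewrite (R1 _ F1 h) by lra. rewrite (R1 _ F2 h) by lra. repeat split; auto.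
  - assert (h < 0) by (destruct (Rle_lt_or_eq_dec _ _ (Rnot_lt_le _ _ n)); auto; contradiction).
    assert (Rabs h = - h) by (apply Rabs_left; lra).
    rewrite (R2 _ F1 h) by lra. rewrite (R2 _ F2 h) by lra. repeat split; auto.
Qed.

Definition pe2 := (k0 x y s / 2 * (- Derive y s) - v3 x y s / (6 * k0 x y s) * Derive x s,
                   k0 x y s / 2 * Derive x s - v3 x y s / (6 * k0 x y s) * Derive y s).

Lemma local_par : exists e, 0 < e /\ forall h, Rabs h < e ->
  on_parabola (x s, y s) (Derive x s, Derive y s) pe2 (Xp x y (s + h)).
Proof.
  destruct K_const as [e [He H]]. exists e. split; auto. intros h Hb.
  destruct (Req_dec h 0) as [->|Hh].
  - exists 0. unfold Xp. rewrite Rplus_0_r. simpl. f_equal; ring.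
  - destruct (H h Hh Hb) as [K1 [K2 [W0 _]]].
    pose proof (al0 x y s r0) as A. feed A.
    set (k1 := k0 x y s / 2) in *. set (k2 := v3 x y s / (6 * k0 x y s)) in *.
    assert (k1nz : k1 <> 0) by (unfold k1, k0; generalize Hk; lra).
    set (U := uu x y s h). set (V := vv x y s h).
    assert (Id : k1 * V = (k1 * U + k2 * V) ^ 2).
    { rewrite <- K1, <- K2. unfold KK1, KK2, U, V. unfold WW in *. field. auto. }
    exists ((k1 * U + k2 * V) / k1). unfold Xp, pe2. simpl.
    assert (EX : x (s + h) = x s + U * Derive x s - V * Derive y s).
    { unfold U, V, uu, vv. 
      transitivity (x s + (Derive x s ^ 2 + Derive y s ^ 2) * (x (s + h) - x s)). rewrite A; ring. ring. }
    assert (EY : y (s + h) = y s + U * Derive y s + V * Derive x s).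
    { unfold U, V, uu, vv. 
      transitivity (y s + (Derive x s ^ 2 + Derive y s ^ 2) * (y (s + h) - y s)). rewrite A; ring. ring. }
    fold k1 k2.
    assert (Vt : V = k1 * ((k1 * U + k2 * V) / k1) ^ 2).
    { apply (Rmult_eq_reg_l k1); auto. rewrite Id. field. auto. }
    f_equal.
    + rewrite EX. set (t := (k1 * U + k2 * V) / k1) in *.
      assert (Ut : U = t - k2 * t ^ 2).
      { replace (k2 * t ^ 2) with (k2 * V / k1). unfold t. field. auto. rewrite Vt. field. auto. }
      rewrite Ut, Vt. fold t. ring.
    + rewrite EY. set (t := (k1 * U + k2 * V) / k1) in *.
      assert (Ut : U = t - k2 * t ^ 2).
      { replace (k2 * t ^ 2) with (k2 * V / k1). unfold t. field. auto. rewrite Vt. field. auto. }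
      rewrite Ut, Vt. fold t. ring.
Qed.

End Par.

Definition Dexpr (P0 d0 P1 d1 P2 d2 : pt) :=
  cross d0 P0 * cross d1 d2 + cross d1 P1 * cross d2 d0 + cross d2 P2 * cross d0 d1.

Lemma U_alg P0 d0 P1 d1 P2 d2 : cross d0 d1 <> 0 -> cross d1 d2 <> 0 -> cross d2 d0 <> 0 ->
  tri_area (line_inter P1 d1 P2 d2) (line_inter P0 d0 P1 d1) (line_inter P0 d0 P2 d2) =
  Dexpr P0 d0 P1 d1 P2 d2 ^ 2 / (2 * Rabs (cross d0 d1 * cross d1 d2 * cross d2 d0)).
Proof.
  intros H1 H2 H3. unfold tri_area.
  assert (E : cross (psub (line_inter P0 d0 P1 d1) (line_inter P1 d1 P2 d2))
                    (psub (line_inter P0 d0 P2 d2) (line_inter P1 d1 P2 d2)) =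
              - (Dexpr P0 d0 P1 d1 P2 d2 ^ 2 / (cross d0 d1 * cross d1 d2 * cross d2 d0))).
  { destruct P0 as [a0 b0], P1 as [a1 b1], P2 as [a2 b2], d0 as [p0 q0], d1 as [p1 q1], d2 as [p2 q2].
    unfold cross, psub, line_inter, Dexpr in *; simpl in *.
    unfold cross, psub; simpl. field. repeat split; auto. intro E; apply H3; lra. }
  rewrite E, Rabs_Ropp. unfold Rdiv. rewrite Rabs_mult, Rabs_inv.
  rewrite (Rabs_right (Dexpr P0 d0 P1 d1 P2 d2 ^ 2)). field.
  apply Rabs_no_R0. repeat apply Rmult_integral_contrapositive; auto.
  apply Rle_ge, pow2_ge_0.
Qed.

Lemma Dexpr_same P0 d0 P1 d1 : Dexpr P0 d0 P1 d1 P1 d1 = 0.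
Proof. unfold Dexpr, cross. ring. Qed.

Lemma lim_dq (g : R -> R) l : is_derive g 0 l -> g 0 = 0 -> lim0 (fun d => g d / d) l.
Proof.
  intros H H0. apply is_derive_Reals in H. apply lim_of_eps. intros eps Heps.
  destruct (H eps Heps) as [d Hd]. exists d. split. apply cond_pos.
  intros h Hh Hb. specialize (Hd h Hh Hb). rewrite Rplus_0_l, H0, Rminus_0_r in Hd. auto.
Qed.


Section Ratio.
Variables (x y : R -> R) (s h1 : R).
Hypothesis Hx1 : ex_derive x (s + h1).
Hypothesis Hx2 : ex_derive (Derive x) (s + h1).
Hypothesis Hy1 : ex_derive y (s + h1).
Hypothesis Hy2 : ex_derive (Derive y) (s + h1).

Definition W1 := (x (s + h1) - x s) * Derive y (s + h1) - (y (s + h1) - y s) * Derive x (s + h1).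

Definition Dfun d := Dexpr (Xp x y s) (Tan x y s) (Xp x y (s + h1)) (Tan x y (s + h1))
   (Xp x y (s + (h1 + d))) (Tan x y (s + (h1 + d))).
Definition c12 d := cross (Tan x y (s + h1)) (Tan x y (s + (h1 + d))).
Definition c20 d := cross (Tan x y (s + (h1 + d))) (Tan x y s).
Definition cT d := cross (psub (Xp x y (s + h1)) (Xp x y s)) (psub (Xp x y (s + (h1 + d))) (Xp x y s)).

Lemma ex0 (f : R -> R) : ex_derive f (s + h1) -> ex_derive f (s + (h1 + 0)).
Proof. rewrite Rplus_0_r. auto. Qed.

Lemma dDfun : is_derive Dfun 0 (- vv x y s h1 * kap x y (s + h1)).
Proof.
  unfold Dfun, Dexpr, cross, Xp, Tan. simpl.
  auto_derive.
  - repeat split; apply ex0; auto.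
  - eta_fix. rewrite !Rplus_0_r. unfold vv, kap, D2. ring.
Qed.

Lemma dc12 : is_derive c12 0 (kap x y (s + h1)).
Proof.
  unfold c12, cross, Tan. simpl. auto_derive.
  - repeat split; apply ex0; auto.
  - eta_fix. rewrite !Rplus_0_r. unfold kap, D2. ring.
Qed.

Lemma dcT : is_derive cT 0 W1.
Proof.
  unfold cT, cross, psub, Xp. simpl. auto_derive.
  - repeat split; apply ex0; auto.
  - eta_fix. rewrite !Rplus_0_r. unfold W1. ring.
Qed.

Lemma lc20 : lim0 c20 (- vv1 x y s h1).
Proof.
  unfold c20, cross, Tan. simpl.
  eapply lim_ext. intros d _. rewrite <- (Rplus_assoc s h1 d). reflexivity.
  eapply lim_val. apply lim_minus; apply lim_mult; try apply lim_c; apply lim_shift; auto.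
  unfold vv1. ring.
Qed.

Lemma ratio_lim : vv x y s h1 <> 0 -> vv1 x y s h1 <> 0 -> kap x y (s + h1) <> 0 -> W1 <> 0 ->
  exists e, 0 < e /\ (forall d, d <> 0 -> Rabs d < e -> 0 < Tarea x y s h1 (h1 + d)) /\
  lim0 (fun d => Uarea x y s h1 (h1 + d) / Tarea x y s h1 (h1 + d))
    (vv x y s h1 ^ 2 * Rabs (kap x y (s + h1)) / (vv1 x y s h1 ^ 2 * Rabs W1)) /\
  lim0 (fun d => Tarea x y s h1 (h1 + d) / Rabs d) (Rabs W1 / 2).
Proof.
  intros Hv Hc Hk HW.
  assert (LD : lim0 (fun d => Dfun d / d) (- vv x y s h1 * kap x y (s + h1))).
  { apply lim_dq. apply dDfun. unfold Dfun. rewrite Rplus_0_r. apply Dexpr_same. }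
  assert (L12 : lim0 (fun d => c12 d / d) (kap x y (s + h1))).
  { apply lim_dq. apply dc12. unfold c12, cross. rewrite Rplus_0_r. ring. }
  assert (LT : lim0 (fun d => cT d / d) W1).
  { apply lim_dq. apply dcT. unfold cT, cross. rewrite Rplus_0_r. ring. }
  pose proof lc20 as L20.
  destruct (lim_sign _ _ L12 Hk) as [e1 [E1 N1]].
  destruct (lim_sign _ _ L20) as [e2 [E2 N2]]. lra.
  destruct (lim_sign _ _ LT HW) as [e3 [E3 N3]].
  exists (Rmin e1 (Rmin e2 e3)). split. repeat apply Rmin_pos; auto.
  pose proof (Rmin_l e1 (Rmin e2 e3)). pose proof (Rmin_r e1 (Rmin e2 e3)).
  pose proof (Rmin_l e2 e3). pose proof (Rmin_r e2 e3).
  assert (NZ : forall d, d <> 0 -> Rabs d < Rmin e1 (Rmin e2 e3) ->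
     c12 d <> 0 /\ c20 d <> 0 /\ cT d <> 0).
  { intros d Hd Hb. specialize (N1 d Hd ltac:(lra)). specialize (N2 d Hd ltac:(lra)).
    specialize (N3 d Hd ltac:(lra)).
    repeat split; intro E; rewrite E in *; unfold Rdiv in *; rewrite Rmult_0_l in *; lra. }
  assert (TE : forall d, Tarea x y s h1 (h1 + d) = Rabs (cT d) / 2) by reflexivity.
  split; [|split].
  - intros d Hd Hb. destruct (NZ d Hd Hb) as [_ [_ H3]]. rewrite TE.
    apply Rmult_lt_0_compat. apply Rabs_pos_lt; auto. lra.
  - apply (lim_ext_loc (fun d => (Dfun d / d) ^ 2 /
        (Rabs (vv1 x y s h1) * Rabs (c12 d / d) * Rabs (c20 d) * Rabs (cT d / d))) _ _ (Rmin e1 (Rmin e2 e3))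
        ltac:(repeat apply Rmin_pos; auto)).
    + intros d Hd Hb. destruct (NZ d Hd Hb) as [Z1 [Z2 Z3]]. rewrite TE.
      unfold Uarea. rewrite U_alg; auto.
      fold (Dfun d). change (cross (Tan x y s) (Tan x y (s + h1))) with (vv1 x y s h1).
      fold (c12 d). fold (c20 d).
      replace ((Dfun d / d) ^ 2) with (Dfun d ^ 2 / Rabs d ^ 2) by (rewrite pow2_abs; field; auto).
      unfold Rdiv. rewrite !Rabs_mult, !Rabs_inv.
      assert (Rabs d <> 0) by (apply Rabs_no_R0; auto).
      assert (Rabs (c12 d) <> 0) by (apply Rabs_no_R0; auto).
      assert (Rabs (c20 d) <> 0) by (apply Rabs_no_R0; auto).
      assert (Rabs (cT d) <> 0) by (apply Rabs_no_R0; auto).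
      assert (Rabs (vv1 x y s h1) <> 0) by (apply Rabs_no_R0; auto).
      field. repeat split; auto.
    + eapply lim_val. apply lim_div. apply lim_pow. exact LD.
      apply lim_mult. apply lim_mult. apply lim_mult. apply lim_c.
      apply lim_abs; exact L12. apply lim_abs; exact L20. apply lim_abs; exact LT.
      repeat (match goal with |- _ * _ <> 0 => apply Rmult_integral_contrapositive; split end);
        apply Rabs_no_R0; auto. apply Ropp_neq_0_compat; auto.
      rewrite Rabs_Ropp. rewrite <- (pow2_abs (vv1 x y s h1)).
      replace ((- vv x y s h1 * kap x y (s + h1)) ^ 2) with
        (vv x y s h1 ^ 2 * Rabs (kap x y (s + h1)) ^ 2) by (rewrite pow2_abs; ring).
      assert (Rabs (kap x y (s + h1)) <> 0) by (apply Rabs_no_R0; auto).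
      assert (Rabs W1 <> 0) by (apply Rabs_no_R0; auto).
      assert (Rabs (vv1 x y s h1) <> 0) by (apply Rabs_no_R0; auto).
      field. repeat split; auto.
  - apply (lim_ext_loc (fun d => Rabs (cT d / d) / 2) _ _ (Rmin e1 (Rmin e2 e3)) ltac:(repeat apply Rmin_pos; auto)).
    + intros d Hd Hb. rewrite TE. unfold Rdiv. rewrite Rabs_mult, Rabs_inv. field.
      apply Rabs_no_R0; auto.
    + apply lim_div. apply lim_abs; exact LT. apply lim_c. lra.
Qed.

End Ratio.

Lemma lim_Rpower f m l : lim0 f l -> 0 < l -> lim0 (fun d => Rpower (f d) m) (Rpower l m).
Proof.
  intros H Hl. unfold Rpower.
  apply (is_lim_comp_continuous f (fun z => exp (m * ln z)) 0 l H).
  apply continuous_exp_comp. apply (continuous_scal_r m ln). apply continuous_ln; auto.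
Qed.


Lemma mu_one (f T : R -> R) lam mu L W : 0 < L -> 0 < W -> lim0 f L ->
  lim0 (fun d => T d / Rabs d) W ->
  (exists e, 0 < e /\ forall d, d <> 0 -> Rabs d < e -> 0 < T d /\ f d = lam * Rpower (T d) mu / T d) ->
  mu = 1 /\ lam = L.
Proof.
  intros HL HW Lf LT [e [He Hf]].
  set (m := mu - 1).
  assert (Hf' : forall d, d <> 0 -> Rabs d < e -> 0 < T d /\ f d = lam * Rpower (T d) m).
  { intros d Hd Hb. destruct (Hf d Hd Hb) as [T0 E]. split; auto. rewrite E.
    replace mu with (m + 1) by (unfold m; ring). rewrite Rpower_plus, Rpower_1 by auto. field. lra. }
  assert (Hl : lam <> 0).
  { intro E0. assert (Z : lim0 f 0).
    { apply (lim_ext_loc (fun _ => 0) _ _ e He). intros d Hd Hb. destruct (Hf' d Hd Hb) as [_ E].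
      rewrite E, E0; ring. apply lim_c. }
    pose proof (lim_unique0 _ _ _ Lf Z). lra. }
  assert (Lq : lim0 (fun d => f d / f (d / 2)) 1).
  { eapply lim_val. apply lim_div. exact Lf. apply lim_comp_half. exact Lf. lra. field. lra. }
  assert (Lg : lim0 (fun d => 2 * (T d / Rabs d) / (T (d / 2) / Rabs (d / 2))) 2).
  { eapply lim_val. apply lim_div. apply lim_mult. apply lim_c. exact LT.
    apply (lim_comp_half (fun d => T d / Rabs d)). exact LT. lra. field. lra. }
  assert (Lp := lim_Rpower _ m _ Lg ltac:(lra)).
  assert (Rdiv_pow : forall a b, 0 < a -> 0 < b -> Rpower (a / b) m = Rpower a m / Rpower b m).
  { intros a b Ha Hb. unfold Rpower. rewrite ln_div by auto.
    replace (m * (ln a - ln b)) with (m * ln a + - (m * ln b)) by ring.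
    rewrite exp_plus, exp_Ropp. field. apply Rgt_not_eq, exp_pos. }
  assert (Lq2 : lim0 (fun d => f d / f (d / 2)) (Rpower 2 m)).
  { apply (lim_ext_loc _ _ _ e He) with (2 := Lp). intros d Hd Hb.
    assert (Hd2 : d / 2 <> 0) by lra.
    assert (Hb2 : Rabs (d / 2) < e) by (rewrite Rabs_half; lra).
    destruct (Hf' d Hd Hb) as [T1 E1]. destruct (Hf' _ Hd2 Hb2) as [T2 E2].
    rewrite E1, E2. rewrite Rabs_half.
    assert (Rabs d <> 0) by (apply Rabs_no_R0; auto).
    replace (2 * (T d / Rabs d) / (T (d / 2) / (Rabs d / 2))) with (T d / T (d / 2)) by (field; split; lra).
    rewrite Rdiv_pow by auto. field. split; auto. apply Rgt_not_eq, exp_pos. }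
  assert (E2 := lim_unique0 _ _ _ Lq Lq2).
  assert (Hm : m = 0).
  { unfold Rpower in E2. apply (f_equal ln) in E2. rewrite ln_exp, ln_1 in E2.
    pose proof ln_lt_2. nra. }
  split. unfold m in Hm; lra.
  assert (Lc : lim0 f lam).
  { apply (lim_ext_loc (fun _ => lam) _ _ e He). intros d Hd Hb. destruct (Hf' d Hd Hb) as [T0 E].
    rewrite E, Hm, Rpower_O by auto. ring. apply lim_c. }
  apply (lim_unique0 _ _ _ Lc Lf).
Qed.


Lemma hyps_at a b x y s : in_I a b s -> strictly_convex a b x y -> arclength_param a b x y ->
  exists r0, 0 < r0 /\ (forall t, Rabs (t - s) < r0 -> in_I a b t) /\
  (forall t, Rabs (t - s) < r0 -> ex_derive x t /\ ex_derive (Derive x) t /\ ex_derive (D2 x) t) /\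
  (forall t, Rabs (t - s) < r0 -> ex_derive y t /\ ex_derive (Derive y) t /\ ex_derive (D2 y) t) /\
  (forall t, Rabs (t - s) < r0 -> Derive x t ^ 2 + Derive y t ^ 2 = 1) /\
  (forall t, Rabs (t - s) < r0 -> kap x y t <> 0).
Proof.
  intros Hs [Cx [Cy [Sm [Cv Kp]]]] Al.
  destruct (open_I a b s Hs) as [r0 [Hr Hb]].
  exists r0. split; auto. split; auto.
  split; [|split; [|split]].
  - intros t Ht. destruct (Cx t (Hb t Ht)) as [D _].
    split; [exact (D 1%nat ltac:(lia))|split; [exact (D 2%nat ltac:(lia))|exact (D 3%nat ltac:(lia))]].
  - intros t Ht. destruct (Cy t (Hb t Ht)) as [D _].
    split; [exact (D 1%nat ltac:(lia))|split; [exact (D 2%nat ltac:(lia))|exact (D 3%nat ltac:(lia))]].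
  - intros t Ht. apply Al, Hb; auto.
  - intros t Ht. destruct (Kp t (Hb t Ht)) as [eps [_ [_ K]]]. rewrite <- kappa_kap.
    intro E; rewrite E in K; lra.
Qed.

Lemma Xp_neq a b x y s t : simple_curve a b x y -> in_I a b s -> in_I a b t -> s <> t ->
  Xp x y s <> Xp x y t.
Proof. intros S Hs Ht Hne E. apply Hne, (S s t Hs Ht E). Qed.

Lemma WW_W1 x y s h : Derive x s ^ 2 + Derive y s ^ 2 = 1 -> WW x y s h = W1 x y s h.
Proof.
  intros A. unfold WW, W1, uu, vv, uu1, vv1.
  transitivity ((Derive x s ^ 2 + Derive y s ^ 2) *
    ((x (s + h) - x s) * Derive y (s + h) - (y (s + h) - y s) * Derive x (s + h))).
  ring. rewrite A; ring.
Qed.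

Lemma setup a b x y s : in_I a b s -> strictly_convex a b x y -> arclength_param a b x y ->
  exists r0 e, 0 < r0 /\ 0 < e /\ e <= r0 /\ (forall t, Rabs (t - s) < r0 -> in_I a b t) /\
  forall h1, h1 <> 0 -> Rabs h1 < e ->
  exists e2, 0 < e2 /\ (forall d, d <> 0 -> Rabs d < e2 -> 0 < Tarea x y s h1 (h1 + d)) /\
  lim0 (fun d => Uarea x y s h1 (h1 + d) / Tarea x y s h1 (h1 + d)) (RR x y s h1) /\
  lim0 (fun d => Tarea x y s h1 (h1 + d) / Rabs d) (Rabs (WW x y s h1) / 2) /\
  0 < RR x y s h1 /\ 0 < Rabs (WW x y s h1) / 2.
Proof.
  intros Hs SC Al.
  destruct (hyps_at a b x y s Hs SC Al) as [r0 [Hr [HI [Hdx [Hdy [Hal Hkp]]]]]].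
  assert (Hk : kap x y s <> 0) by (apply Hkp; rewrite Rminus_eq_0, Rabs_R0; auto).
  pose proof (local_nz x y s r0) as LN. feed LN. destruct LN as [e1 [E1 N1]].
  pose proof (al0 x y s r0) as A0. feed A0.
  exists r0, (Rmin e1 r0). split; auto. split. apply Rmin_pos; auto. split. apply Rmin_r. split; auto.
  intros h1 Hh Hb. pose proof (Rmin_l e1 r0). pose proof (Rmin_r e1 r0).
  destruct (N1 h1 Hh ltac:(lra)) as [n1 [n2 [n3 [n4 [n5 n6]]]]].
  assert (hh : 0 < h1 ^ 2) by (pose proof (Rsqr_pos_lt h1 Hh); unfold Rsqr in *; nra).
  pose proof (eq_W x y s r0) as eW. feed eW. specialize (eW h1 Hh).
  pose proof (eq_v x y s h1 Hh) as eV. pose proof (eq_v1 x y s h1 Hh) as eV1.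
  assert (v0 : vv x y s h1 <> 0) by (rewrite eV; apply Rmult_integral_contrapositive; split; lra).
  assert (v10 : vv1 x y s h1 <> 0) by (rewrite eV1; apply Rmult_integral_contrapositive; split; lra).
  assert (W0 : WW x y s h1 <> 0) by (rewrite eW; apply Rmult_integral_contrapositive; split; lra).
  rewrite (WW_W1 x y s h1 A0) in *.
  assert (Hh1 : Rabs (s + h1 - s) < r0) by (replace (s + h1 - s) with h1 by ring; lra).
  destruct (Hdx _ Hh1) as [X1 [X2 _]]. destruct (Hdy _ Hh1) as [Y1 [Y2 _]].
  pose proof (ratio_lim x y s h1 X1 X2 Y1 Y2 v0 v10 n6 W0) as RL.
  destruct RL as [e2 [E2 [T0 [L1 L2]]]].
  exists e2. split; auto. split; auto. split; [|split; auto].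
  unfold RR. rewrite (WW_W1 x y s h1 A0). exact L1.
  split.
  - unfold RR. rewrite (WW_W1 x y s h1 A0).
    apply Rdiv_lt_0_compat. apply Rmult_lt_0_compat. 
    pose proof (Rsqr_pos_lt _ v0); unfold Rsqr in *; nra. apply Rabs_pos_lt; auto.
    apply Rmult_lt_0_compat. pose proof (Rsqr_pos_lt _ v10); unfold Rsqr in *; nra. apply Rabs_pos_lt; auto.
  - pose proof (Rabs_pos_lt _ W0). lra.
Qed.

Lemma good_d a b x y s r0 ds h1 : simple_curve a b x y -> in_I a b s ->
  (forall t, Rabs (t - s) < r0 -> in_I a b t) -> h1 <> 0 -> Rabs h1 < r0 -> Rabs h1 < ds ->
  exists rho, 0 < rho /\ forall d, d <> 0 -> Rabs d < rho ->
    Rabs h1 < ds /\ Rabs (h1 + d) < ds /\ in_I a b (s + h1) /\ in_I a b (s + (h1 + d)) /\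
    Xp x y s <> Xp x y (s + h1) /\ Xp x y s <> Xp x y (s + (h1 + d)) /\
    Xp x y (s + h1) <> Xp x y (s + (h1 + d)).
Proof.
  intros Sm Hs HI Hh H1 H2.
  assert (Ha : 0 < Rabs h1) by (apply Rabs_pos_lt; auto).
  exists (Rmin (ds - Rabs h1) (Rmin (Rabs h1) (r0 - Rabs h1))).
  split. repeat apply Rmin_pos; lra.
  intros d Hd Hb.
  pose proof (Rmin_l (ds - Rabs h1) (Rmin (Rabs h1) (r0 - Rabs h1))).
  pose proof (Rmin_r (ds - Rabs h1) (Rmin (Rabs h1) (r0 - Rabs h1))).
  pose proof (Rmin_l (Rabs h1) (r0 - Rabs h1)). pose proof (Rmin_r (Rabs h1) (r0 - Rabs h1)).
  pose proof (Rabs_triang h1 d).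
  assert (Hhd : h1 + d <> 0).
  { intro E. replace d with (- h1) in Hb by lra. rewrite Rabs_Ropp in Hb. lra. }
  assert (I1 : in_I a b (s + h1)) by (apply HI; replace (s + h1 - s) with h1 by ring; lra).
  assert (I2 : in_I a b (s + (h1 + d))) by (apply HI; replace (s + (h1 + d) - s) with (h1 + d) by ring; lra).
  split; [lra|split; [lra|split; [auto|split; [auto|split; [|split]]]]].
  - apply (Xp_neq a b); auto. lra.
  - apply (Xp_neq a b); auto. lra.
  - apply (Xp_neq a b); auto. lra.
Qed.

Lemma ODE_P2 a b x y s : in_I a b s -> strictly_convex a b x y -> arclength_param a b x y ->
  for_small_h a b x y s (fun h1 h2 => Uarea x y s h1 h2 = / 2 * Tarea x y s h1 h2) ->
  exists e, 0 < e /\ forall h, h <> 0 -> Rabs h < e -> RR x y s h = 1 / 2.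
Proof.
  intros Hs SC Al [ds [Hds P]].
  destruct (setup a b x y s Hs SC Al) as [r0 [e [Hr [He [Her [HI St]]]]]].
  exists (Rmin e ds). split. apply Rmin_pos; auto.
  intros h1 Hh Hb. pose proof (Rmin_l e ds). pose proof (Rmin_r e ds).
  destruct (St h1 Hh ltac:(lra)) as [e2 [E2 [T0 [L1 [L2 [R0 W0]]]]]].
  destruct SC as [_ [_ [Sm _]]].
  destruct (good_d a b x y s r0 ds h1 Sm Hs HI Hh ltac:(lra) ltac:(lra)) as [rho [Hrho G]].
  apply (lim_unique0 _ _ _ L1).
  apply (lim_ext_loc (fun _ => 1 / 2) _ _ (Rmin e2 rho)). apply Rmin_pos; auto.
  intros d Hd Hdb. pose proof (Rmin_l e2 rho). pose proof (Rmin_r e2 rho).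
  destruct (G d Hd ltac:(lra)) as [g1 [g2 [g3 [g4 [g5 [g6 g7]]]]]].
  rewrite (P h1 (h1 + d) g1 g2 g3 g4 g5 g6 g7). specialize (T0 d Hd ltac:(lra)). field. lra.
  apply lim_c.
Qed.

Lemma ODE_P1 a b x y s lam mu : in_I a b s -> strictly_convex a b x y -> arclength_param a b x y ->
  for_small_h a b x y s (fun h1 h2 => Uarea x y s h1 h2 = lam * Rpower (Tarea x y s h1 h2) mu) ->
  exists e, 0 < e /\ forall h, h <> 0 -> Rabs h < e -> RR x y s h = 1 / 2.
Proof.
  intros Hs SC Al [ds [Hds P]].
  destruct (setup a b x y s Hs SC Al) as [r0 [e [Hr [He [Her [HI St]]]]]].
  assert (Key : forall h1, h1 <> 0 -> Rabs h1 < Rmin e ds -> RR x y s h1 = lam).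
  { intros h1 Hh Hb. pose proof (Rmin_l e ds). pose proof (Rmin_r e ds).
    destruct (St h1 Hh ltac:(lra)) as [e2 [E2 [T0 [L1 [L2 [R0 W0]]]]]].
    destruct SC as [_ [_ [Sm _]]].
    destruct (good_d a b x y s r0 ds h1 Sm Hs HI Hh ltac:(lra) ltac:(lra)) as [rho [Hrho G]].
    symmetry. eapply proj2. apply (mu_one _ (fun d => Tarea x y s h1 (h1 + d)) lam mu _ _ R0 W0 L1 L2).
    exists (Rmin e2 rho). split. apply Rmin_pos; auto.
    intros d Hd Hdb. pose proof (Rmin_l e2 rho). pose proof (Rmin_r e2 rho).
    destruct (G d Hd ltac:(lra)) as [g1 [g2 [g3 [g4 [g5 [g6 g7]]]]]].
    split. apply T0; auto; lra.
    rewrite (P h1 (h1 + d) g1 g2 g3 g4 g5 g6 g7). reflexivity. }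
  destruct (hyps_at a b x y s Hs SC Al) as [r1 [Hr1 [_ [Hdx [Hdy [Hal Hkp]]]]]].
  assert (Hk : kap x y s <> 0) by (apply Hkp; rewrite Rminus_eq_0, Rabs_R0; auto).
  pose proof (lim_RR x y s r1) as LR. feed LR.
  assert (Hl : lam = 1 / 2).
  { apply (lim_const_right (RR x y s) lam (1/2) (Rmin e ds)). apply Rmin_pos; auto.
    intros h Hh. apply Key. lra. rewrite Rabs_right; lra. exact LR. }
  exists (Rmin e ds). split. apply Rmin_pos; auto. intros h Hh Hb. rewrite Key; auto.
Qed.

Lemma poly1 a0 a1 t1 t2 : t1 <> t2 -> a0 + a1 * t1 = 0 -> a0 + a1 * t2 = 0 -> a0 = 0 /\ a1 = 0.
Proof.
  intros H E1 E2. assert (a1 * (t1 - t2) = 0) by lra.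
  destruct (Rmult_integral _ _ H0) as [|H1]. split; nra. exfalso; apply H; lra.
Qed.

Lemma div_root (q : R) t t1 : t <> t1 -> (t - t1) * q = 0 -> q = 0.
Proof. intros H E. destruct (Rmult_integral _ _ E); auto. exfalso; apply H; lra. Qed.

Lemma poly2 a0 a1 a2 t1 t2 t3 : t1 <> t2 -> t1 <> t3 -> t2 <> t3 ->
  a0 + a1 * t1 + a2 * t1 ^ 2 = 0 -> a0 + a1 * t2 + a2 * t2 ^ 2 = 0 -> a0 + a1 * t3 + a2 * t3 ^ 2 = 0 ->
  a0 = 0 /\ a1 = 0 /\ a2 = 0.
Proof.
  intros H12 H13 H23 E1 E2 E3.
  assert (Q2 : (a1 + a2 * t1) + a2 * t2 = 0).
  { apply (div_root _ t2 t1); auto. replace ((t2 - t1) * (a1 + a2 * t1 + a2 * t2)) with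
      ((a0 + a1 * t2 + a2 * t2 ^ 2) - (a0 + a1 * t1 + a2 * t1 ^ 2)) by ring. lra. }
  assert (Q3 : (a1 + a2 * t1) + a2 * t3 = 0).
  { apply (div_root _ t3 t1); auto. replace ((t3 - t1) * (a1 + a2 * t1 + a2 * t3)) with
      ((a0 + a1 * t3 + a2 * t3 ^ 2) - (a0 + a1 * t1 + a2 * t1 ^ 2)) by ring. lra. }
  destruct (poly1 _ _ _ _ H23 Q2 Q3) as [P0 P1]. subst.
  repeat split; nra.
Qed.

Lemma poly3 a0 a1 a2 a3 t1 t2 t3 t4 : t1 <> t2 -> t1 <> t3 -> t1 <> t4 -> t2 <> t3 -> t2 <> t4 -> t3 <> t4 ->
  a0 + a1 * t1 + a2 * t1 ^ 2 + a3 * t1 ^ 3 = 0 -> a0 + a1 * t2 + a2 * t2 ^ 2 + a3 * t2 ^ 3 = 0 ->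
  a0 + a1 * t3 + a2 * t3 ^ 2 + a3 * t3 ^ 3 = 0 -> a0 + a1 * t4 + a2 * t4 ^ 2 + a3 * t4 ^ 3 = 0 ->
  a0 = 0 /\ a1 = 0 /\ a2 = 0 /\ a3 = 0.
Proof.
  intros H12 H13 H14 H23 H24 H34 E1 E2 E3 E4.
  set (c0 := a1 + a2 * t1 + a3 * t1 ^ 2). set (c1 := a2 + a3 * t1). set (c2 := a3).
  assert (Qi : forall t, t <> t1 -> a0 + a1 * t + a2 * t ^ 2 + a3 * t ^ 3 = 0 -> c0 + c1 * t + c2 * t ^ 2 = 0).
  { intros t Ht Et. apply (div_root _ t t1); auto. unfold c0, c1, c2.
    replace ((t - t1) * (a1 + a2 * t1 + a3 * t1 ^ 2 + (a2 + a3 * t1) * t + a3 * t ^ 2)) with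
      ((a0 + a1 * t + a2 * t ^ 2 + a3 * t ^ 3) - (a0 + a1 * t1 + a2 * t1 ^ 2 + a3 * t1 ^ 3)) by ring. lra. }
  destruct (poly2 _ _ _ _ _ _ H23 H24 H34 (Qi _ (not_eq_sym H12) E2) (Qi _ (not_eq_sym H13) E3)
    (Qi _ (not_eq_sym H14) E4)) as [P0 [P1 P2]].
  unfold c0, c1, c2 in *. assert (a3 = 0) by auto. subst a3.
  assert (a2 = 0) by lra. subst a2. assert (a1 = 0) by lra. subst a1.
  repeat split; lra.
Qed.

Lemma poly4 a0 a1 a2 a3 a4 t1 t2 t3 t4 t5 :
  t1 <> t2 -> t1 <> t3 -> t1 <> t4 -> t1 <> t5 -> t2 <> t3 -> t2 <> t4 -> t2 <> t5 ->
  t3 <> t4 -> t3 <> t5 -> t4 <> t5 ->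
  (forall t, t = t1 \/ t = t2 \/ t = t3 \/ t = t4 \/ t = t5 ->
     a0 + a1 * t + a2 * t ^ 2 + a3 * t ^ 3 + a4 * t ^ 4 = 0) ->
  forall t, a0 + a1 * t + a2 * t ^ 2 + a3 * t ^ 3 + a4 * t ^ 4 = 0.
Proof.
  intros H12 H13 H14 H15 H23 H24 H25 H34 H35 H45 E.
  set (c0 := a1 + a2 * t1 + a3 * t1 ^ 2 + a4 * t1 ^ 3). set (c1 := a2 + a3 * t1 + a4 * t1 ^ 2).
  set (c2 := a3 + a4 * t1). set (c3 := a4).
  assert (E1 : a0 + a1 * t1 + a2 * t1 ^ 2 + a3 * t1 ^ 3 + a4 * t1 ^ 4 = 0) by (apply E; auto).
  assert (Qi : forall t, t <> t1 -> a0 + a1 * t + a2 * t ^ 2 + a3 * t ^ 3 + a4 * t ^ 4 = 0 ->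
     c0 + c1 * t + c2 * t ^ 2 + c3 * t ^ 3 = 0).
  { intros t Ht Et. apply (div_root _ t t1); auto. unfold c0, c1, c2, c3.
    replace ((t - t1) * (a1 + a2 * t1 + a3 * t1 ^ 2 + a4 * t1 ^ 3 + (a2 + a3 * t1 + a4 * t1 ^ 2) * t +
      (a3 + a4 * t1) * t ^ 2 + a4 * t ^ 3)) with
      ((a0 + a1 * t + a2 * t ^ 2 + a3 * t ^ 3 + a4 * t ^ 4) -
       (a0 + a1 * t1 + a2 * t1 ^ 2 + a3 * t1 ^ 3 + a4 * t1 ^ 4)) by ring. lra. }
  destruct (poly3 _ _ _ _ _ _ _ _ H23 H24 H25 H34 H35 H45
    (Qi _ (not_eq_sym H12) (E t2 ltac:(auto))) (Qi _ (not_eq_sym H13) (E t3 ltac:(auto)))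
    (Qi _ (not_eq_sym H14) (E t4 ltac:(auto))) (Qi _ (not_eq_sym H15) (E t5 ltac:(auto))))
    as [P0 [P1 [P2 P3]]].
  unfold c0, c1, c2, c3 in *. subst a4.
  assert (a3 = 0) by lra. subst a3. assert (a2 = 0) by lra. subst a2. assert (a1 = 0) by lra. subst a1.
  intros t. lra.
Qed.

Definition Qp (c e1 e2 p : pt) :=
  cross e1 e2 * cross e1 (psub p c) - cross (psub p c) e2 ^ 2.

Lemma Qp_on c e1 e2 p : on_parabola c e1 e2 p -> Qp c e1 e2 p = 0.
Proof.
  intros [t ->]. destruct c, e1, e2. unfold Qp, cross, psub; simpl. ring.
Qed.

Lemma on_Qp c e1 e2 p : cross e1 e2 <> 0 -> Qp c e1 e2 p = 0 -> on_parabola c e1 e2 p.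
Proof.
  intros HD HQ. set (D := cross e1 e2) in *.
  exists (cross (psub p c) e2 / D).
  assert (Hb : cross e1 (psub p c) = (cross (psub p c) e2 / D) ^ 2 * D).
  { unfold Qp in HQ. fold D in HQ. field_simplify; auto. apply (Rmult_eq_reg_l D); auto.
    replace (D * (cross (psub p c) e2 ^ 2 / D)) with (cross (psub p c) e2 ^ 2) by (field; auto). lra. }
  destruct c as [c1 c2], e1 as [p1 q1], e2 as [p2 q2], p as [a b].
  unfold D, cross, psub in *; simpl in *. 
  set (t := ((a - c1) * q2 - (b - c2) * p2) / (p1 * q2 - q1 * p2)) in *.
  assert (E1 : (a - c1) * q2 - (b - c2) * p2 = t * (p1 * q2 - q1 * p2)) by (unfold t; field; auto).
  f_equal.
  - apply (Rmult_eq_reg_l (p1 * q2 - q1 * p2)); auto.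
    replace ((p1 * q2 - q1 * p2) * a) with ((p1 * q2 - q1 * p2) * c1 + p1 * ((a - c1) * q2 - (b - c2) * p2) 
       + p2 * (p1 * (b - c2) - q1 * (a - c1))) by ring.
    rewrite E1, Hb. ring.
  - apply (Rmult_eq_reg_l (p1 * q2 - q1 * p2)); auto.
    replace ((p1 * q2 - q1 * p2) * b) with ((p1 * q2 - q1 * p2) * c2 + q1 * ((a - c1) * q2 - (b - c2) * p2) 
       + q2 * (p1 * (b - c2) - q1 * (a - c1))) by ring.
    rewrite E1, Hb. ring.
Qed.

Definition ppar (c e1 e2 : pt) (t : R) : pt :=
  (fst c + t * fst e1 + t ^ 2 * fst e2, snd c + t * snd e1 + t ^ 2 * snd e2).

Lemma Qp_comp cA e1A e2A cB e1B e2B t :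
  let w0 := psub cA cB in let D := cross e1B e2B in
  let l0 := cross e1B w0 in let l1 := cross e1B e1A in let l2 := cross e1B e2A in
  let m0 := cross w0 e2B in let m1 := cross e1A e2B in let m2 := cross e2A e2B in
  Qp cB e1B e2B (ppar cA e1A e2A t) =
   (D * l0 - m0 ^ 2) + (D * l1 - 2 * m0 * m1) * t + (D * l2 - m1 ^ 2 - 2 * m0 * m2) * t ^ 2
   + (- 2 * m1 * m2) * t ^ 3 + (- m2 ^ 2) * t ^ 4.
Proof.
  destruct cA, e1A, e2A, cB, e1B, e2B. unfold Qp, ppar, cross, psub; simpl. ring.
Qed.

Lemma share cA e1A e2A cB e1B e2B (P : nat -> pt) :
  cross e1A e2A <> 0 -> cross e1B e2B <> 0 ->
  (forall i j, (i < 5)%nat -> (j < 5)%nat -> i <> j -> P i <> P j) ->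
  (forall i, (i < 5)%nat -> on_parabola cA e1A e2A (P i) /\ on_parabola cB e1B e2B (P i)) ->
  forall p, on_parabola cA e1A e2A p -> on_parabola cB e1B e2B p.
Proof.
  intros DA DB Hd Ho p Hp.
  destruct (Ho 0%nat ltac:(lia)) as [[t1 E1] B1].
  destruct (Ho 1%nat ltac:(lia)) as [[t2 E2] B2].
  destruct (Ho 2%nat ltac:(lia)) as [[t3 E3] B3].
  destruct (Ho 3%nat ltac:(lia)) as [[t4 E4] B4].
  destruct (Ho 4%nat ltac:(lia)) as [[t5 E5] B5].
  assert (Dt : forall i j ti tj, (i < 5)%nat -> (j < 5)%nat -> i <> j -> P i = ppar cA e1A e2A ti ->
     P j = ppar cA e1A e2A tj -> ti <> tj).
  { intros i j ti tj Hi Hj Hij Ei Ej E. apply (Hd i j Hi Hj Hij). rewrite Ei, Ej, E. reflexivity. }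
  apply on_Qp; auto. destruct Hp as [t ->].
  change (Qp cB e1B e2B (ppar cA e1A e2A t) = 0).
  rewrite Qp_comp. apply poly4 with t1 t2 t3 t4 t5;
    try (eapply Dt; [| | |eassumption|eassumption]; lia).
  intros t' Ht'. rewrite <- Qp_comp.
  destruct Ht' as [H|[H|[H|[H|H]]]]; subst t'; apply Qp_on; unfold ppar;
    [rewrite <- E1 | rewrite <- E2 | rewrite <- E3 | rewrite <- E4 | rewrite <- E5]; auto.
Qed.

Lemma conn1 (P : R -> Prop) al be : al <= be ->
  (forall t, al <= t <= be -> exists e, 0 < e /\ forall t', al <= t' <= be -> Rabs (t' - t) < e -> (P t <-> P t')) ->
  P al -> P be.
Proof.
  intros Hab Hl Pa.
  set (E := fun t => al <= t <= be /\ forall u, al <= u <= t -> P u).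
  assert (Eb : bound E) by (exists be; intros t [Ht _]; lra).
  assert (Ea : exists t, E t) by (exists al; split; [lra|intros u Hu; replace u with al by lra; auto]).
  destruct (completeness E Eb Ea) as [sg [Hub Hlub]].
  assert (Hs1 : al <= sg) by (apply Hub; split; [lra|intros u Hu; replace u with al by lra; auto]).
  assert (Hs2 : sg <= be) by (apply Hlub; intros t [Ht _]; lra).
  destruct (Hl sg ltac:(lra)) as [e [He Hloc]].
  assert (Ht : exists t, E t /\ sg - e < t).
  { apply NNPP. intro N. assert (sg <= sg - e); [|lra].
    apply Hlub. intros t Et. apply Rnot_lt_le. intro Lt. apply N. exists t; auto. }
  destruct Ht as [t [[Ht1 Ht2] Ht3]].
  assert (tle : t <= sg) by (apply Hub; split; auto).
  assert (Psg : P sg).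
  { apply (Hloc t). lra. rewrite Rabs_left1; lra. apply Ht2; lra. }
  assert (Pall : forall u, al <= u <= be -> Rabs (u - sg) < e -> P u).
  { intros u Hu Hb. apply (Hloc u); auto. }
  assert (Esg : forall u, al <= u <= Rmin (sg + e / 2) be -> P u).
  { intros u Hu. pose proof (Rmin_l (sg + e/2) be). pose proof (Rmin_r (sg + e/2) be).
    destruct (Rle_lt_dec u t). apply Ht2; lra.
    apply Pall. lra. apply Rabs_def1; lra. }
  destruct (Rlt_dec sg be).
  - exfalso. assert (Rmin (sg + e / 2) be <= sg).
    { apply Hub. split. split. apply Rmin_glb; lra. apply Rmin_r. exact Esg. }
    unfold Rmin in H. destruct (Rle_dec (sg + e/2) be); lra.
  - apply Pall. lra. replace (be - sg) with 0 by lra. rewrite Rabs_R0; auto.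
Qed.

Lemma conn (P : R -> Prop) al be : al <= be ->
  (forall t, al <= t <= be -> exists e, 0 < e /\ forall t', al <= t' <= be -> Rabs (t' - t) < e -> (P t <-> P t')) ->
  (P al <-> P be).
Proof.
  intros Hab Hl. split.
  - apply conn1; auto.
  - intros Pb. apply NNPP. intro Na.
    assert (~ P be); [|contradiction].
    apply (conn1 (fun t => ~ P t) al be); auto.
    intros t Ht. destruct (Hl t Ht) as [e [He H]]. exists e. split; auto.
    intros t' Ht' Hb. specialize (H t' Ht' Hb). tauto.
Qed.

Lemma in_I_between a b u w t : in_I a b u -> in_I a b w -> u <= t <= w -> in_I a b t.
Proof.
  intros [Hu1 Hu2] [Hw1 Hw2] Ht. split.
  - destruct a; simpl in *; auto; lra.
  - destruct b; simpl in *; auto; lra.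
Qed.

Definition Par (x y : R -> R) s := (Xp x y s, Tan x y s, pe2 x y s).
Definition onP (x y : R -> R) s p :=
  on_parabola (Xp x y s) (Tan x y s) (pe2 x y s) p.

Section Glue.
Variables (a b : Rbar) (x y : R -> R).
Hypothesis SC : strictly_convex a b x y.
Hypothesis AL : arclength_param a b x y.
Hypothesis ODE : forall s, in_I a b s -> exists e, 0 < e /\ forall h, h <> 0 -> Rabs h < e -> RR x y s h = 1 / 2.

Lemma loc s : in_I a b s -> exists e, 0 < e /\ forall h, Rabs h < e ->
  in_I a b (s + h) /\ onP x y s (Xp x y (s + h)).
Proof.
  intros Hs. destruct (hyps_at a b x y s Hs SC AL) as [r0 [Hr [HI [Hdx [Hdy [Hal Hkp]]]]]].
  assert (Hk : kap x y s <> 0) by (apply Hkp; rewrite Rminus_eq_0, Rabs_R0; auto).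
  pose proof (local_par x y s r0) as LP. feed LP. destruct LP as [e [He Hp]].
  exists (Rmin e r0). split. apply Rmin_pos; auto. intros h Hh.
  pose proof (Rmin_l e r0). pose proof (Rmin_r e r0). split.
  apply HI. replace (s + h - s) with h by ring. lra.
  apply Hp. lra.
Qed.

Lemma nondeg s : in_I a b s -> cross (Tan x y s) (pe2 x y s) <> 0.
Proof.
  intros Hs. destruct (hyps_at a b x y s Hs SC AL) as [r0 [Hr [HI [Hdx [Hdy [Hal Hkp]]]]]].
  assert (Hk : kap x y s <> 0) by (apply Hkp; rewrite Rminus_eq_0, Rabs_R0; auto).
  pose proof (al0 x y s r0) as A. feed A.
  unfold Tan, pe2, cross; simpl.
  replace (Derive x s * (k0 x y s / 2 * Derive x s - v3 x y s / (6 * k0 x y s) * Derive y s) -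
    Derive y s * (k0 x y s / 2 * - Derive y s - v3 x y s / (6 * k0 x y s) * Derive x s))
  with (k0 x y s / 2 * (Derive x s ^ 2 + Derive y s ^ 2)) by (field; exact Hk).
  rewrite A. unfold k0. lra.
Qed.

Lemma prop s : in_I a b s -> exists e, 0 < e /\ forall s', in_I a b s' -> Rabs (s' - s) < e ->
  forall p, onP x y s p <-> onP x y s' p.
Proof.
  intros Hs. destruct (loc s Hs) as [e [He Hl]]. exists e. split; auto.
  intros s' Hs' Hb. destruct (loc s' Hs') as [e' [He' Hl']].
  set (eta := Rmin e' (e - Rabs (s' - s)) / 5).
  assert (Heta : 0 < eta) by (unfold eta; apply Rdiv_lt_0_compat; [apply Rmin_pos|]; lra).
  pose proof (Rmin_l e' (e - Rabs (s' - s))). pose proof (Rmin_r e' (e - Rabs (s' - s))).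
  set (P := fun i : nat => Xp x y (s' + INR i * eta)).
  assert (Hi : forall i, (i < 5)%nat -> 0 <= INR i * eta <= 4 * eta).
  { intros i Hi. split. apply Rmult_le_pos. apply pos_INR. lra.
    apply Rmult_le_compat_r. lra. replace 4 with (INR 4) by (simpl; ring). apply le_INR. lia. }
  assert (On : forall i, (i < 5)%nat -> onP x y s (P i) /\ onP x y s' (P i)).
  { intros i Hi5. specialize (Hi i Hi5). split.
    - unfold P. replace (s' + INR i * eta) with (s + (s' - s + INR i * eta)) by ring.
      apply Hl. pose proof (Rabs_triang (s' - s) (INR i * eta)).
      rewrite (Rabs_right (INR i * eta)) in H1 by lra. unfold eta in *. lra.
    - unfold P. apply Hl'. rewrite Rabs_right by lra. unfold eta in *. lra. }
  assert (InI : forall i, (i < 5)%nat -> in_I a b (s' + INR i * eta)).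
  { intros i Hi5. apply Hl'. specialize (Hi i Hi5). rewrite Rabs_right by lra. unfold eta in *. lra. }
  destruct SC as [_ [_ [Sm _]]].
  assert (Dist : forall i j, (i < 5)%nat -> (j < 5)%nat -> i <> j -> P i <> P j).
  { intros i j Hi5 Hj5 Hij E. apply Hij. apply INR_eq.
    assert (E2 := Sm _ _ (InI i Hi5) (InI j Hj5) E).
    apply (Rmult_eq_reg_r eta); lra. }
  intros p. split.
  - apply (share _ _ _ _ _ _ P (nondeg s Hs) (nondeg s' Hs') Dist).
    intros i Hi5. destruct (On i Hi5); split; auto.
  - apply (share _ _ _ _ _ _ P (nondeg s' Hs') (nondeg s Hs) Dist).
    intros i Hi5. destruct (On i Hi5); split; auto.
Qed.

Lemma global s0 : in_I a b s0 -> forall s, in_I a b s -> onP x y s0 (Xp x y s).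
Proof.
  intros H0 s Hs.
  assert (Self : onP x y s (Xp x y s)).
  { destruct (loc s Hs) as [e [He Hl]]. destruct (Hl 0) as [_ Hp]. rewrite Rabs_R0; auto.
    rewrite Rplus_0_r in Hp. exact Hp. }
  set (Q := fun t => forall p, onP x y s0 p <-> onP x y t p).
  assert (Loc : forall al be, in_I a b al -> in_I a b be -> al <= be -> (Q al <-> Q be)).
  { intros al be Ha Hb Hab. apply conn; auto.
    intros t Ht. assert (It : in_I a b t) by (apply (in_I_between a b al be); auto).
    destruct (prop t It) as [e [He Hp]]. exists e. split; auto.
    intros t' Ht' Htt. assert (It' : in_I a b t') by (apply (in_I_between a b al be); auto).
    specialize (Hp t' It' Htt). unfold Q. split; intros HQ p; rewrite HQ; auto. rewrite Hp; tauto. }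
  assert (Q0 : Q s0) by (intros p; tauto).
  assert (Qs : Q s).
  { destruct (Rle_dec s0 s). apply (Loc s0 s); auto. apply (Loc s s0); auto. lra. }
  apply Qs. exact Self.
Qed.

End Glue.

Definition tdir (e1 e2 : pt) k t : pt := (k * (fst e1 + 2 * t * fst e2), k * (snd e1 + 2 * t * snd e2)).

Lemma inter_par c e1 e2 ti tj ki kj : cross e1 e2 <> 0 -> ti <> tj -> ki <> 0 -> kj <> 0 ->
  line_inter (ppar c e1 e2 ti) (tdir e1 e2 ki ti) (ppar c e1 e2 tj) (tdir e1 e2 kj tj) =
  (fst c + (ti + tj) / 2 * fst e1 + ti * tj * fst e2, snd c + (ti + tj) / 2 * snd e1 + ti * tj * snd e2).
Proof.
  intros HD Ht Hi Hj. destruct c as [c1 c2], e1 as [p1 q1], e2 as [p2 q2].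
  unfold line_inter, ppar, tdir, cross, psub in *; simpl in *.
  assert (tj - ti <> 0) by (intro; apply Ht; lra).
  f_equal; field; repeat split; auto;
  (replace (ki * (p1 + 2 * ti * p2) * (kj * (q1 + 2 * tj * q2)) - ki * (q1 + 2 * ti * q2) * (kj * (p1 + 2 * tj * p2)))
    with (2 * ki * kj * (tj - ti) * (p1 * q2 - q1 * p2)) by ring;
   repeat (match goal with |- _ * _ <> 0 => apply Rmult_integral_contrapositive; split end);
   auto; intro; lra).
Qed.

Lemma par_T c e1 e2 t0 t1 t2 :
  tri_area (ppar c e1 e2 t0) (ppar c e1 e2 t1) (ppar c e1 e2 t2) =
  Rabs (cross e1 e2 * (t1 - t0) * (t2 - t0) * (t2 - t1)) / 2.
Proof.
  unfold tri_area. f_equal. f_equal. destruct c, e1, e2. unfold ppar, cross, psub; simpl. ring.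
Qed.

Lemma par_U c e1 e2 t0 t1 t2 k0 k1 k2 : cross e1 e2 <> 0 -> t0 <> t1 -> t0 <> t2 -> t1 <> t2 ->
  k0 <> 0 -> k1 <> 0 -> k2 <> 0 ->
  tri_area (line_inter (ppar c e1 e2 t1) (tdir e1 e2 k1 t1) (ppar c e1 e2 t2) (tdir e1 e2 k2 t2))
           (line_inter (ppar c e1 e2 t0) (tdir e1 e2 k0 t0) (ppar c e1 e2 t1) (tdir e1 e2 k1 t1))
           (line_inter (ppar c e1 e2 t0) (tdir e1 e2 k0 t0) (ppar c e1 e2 t2) (tdir e1 e2 k2 t2)) =
  / 2 * tri_area (ppar c e1 e2 t0) (ppar c e1 e2 t1) (ppar c e1 e2 t2).
Proof.
  intros HD H01 H02 H12 K0 K1 K2.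
  rewrite !inter_par by auto. rewrite par_T. unfold tri_area.
  replace (cross (psub
     (fst c + (t0 + t1) / 2 * fst e1 + t0 * t1 * fst e2, snd c + (t0 + t1) / 2 * snd e1 + t0 * t1 * snd e2)
     (fst c + (t1 + t2) / 2 * fst e1 + t1 * t2 * fst e2, snd c + (t1 + t2) / 2 * snd e1 + t1 * t2 * snd e2))
    (psub
     (fst c + (t0 + t2) / 2 * fst e1 + t0 * t2 * fst e2, snd c + (t0 + t2) / 2 * snd e1 + t0 * t2 * snd e2)
     (fst c + (t1 + t2) / 2 * fst e1 + t1 * t2 * fst e2, snd c + (t1 + t2) / 2 * snd e1 + t1 * t2 * snd e2)))
  with ((cross e1 e2 * (t1 - t0) * (t2 - t0) * (t2 - t1)) / 2).
  rewrite Rabs_div, (Rabs_right 2) by lra. field.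
  destruct c, e1, e2. unfold cross, psub; simpl. field.
Qed.

Section Par3.
Variables (a b : Rbar) (x y : R -> R) (c e1 e2 : pt).
Hypothesis SC : strictly_convex a b x y.
Hypothesis AL : arclength_param a b x y.
Hypothesis HD : cross e1 e2 <> 0.
Hypothesis Hon : forall s, in_I a b s -> on_parabola c e1 e2 (Xp x y s).

Definition tau s := cross (psub (Xp x y s) c) e2 / cross e1 e2.

Lemma Xp_par s : in_I a b s -> Xp x y s = ppar c e1 e2 (tau s).
Proof.
  intros Hs. destruct (Hon s Hs) as [t Ht].
  assert (E : tau s = t).
  { unfold tau. rewrite Ht. destruct c, e1, e2. unfold cross, psub in *; simpl in *. field. auto. }
  rewrite E, Ht. reflexivity.
Qed.

Lemma Tan_par s : in_I a b s -> Tan x y s = tdir e1 e2 (cross (Tan x y s) e2 / cross e1 e2) (tau s).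
Proof.
  intros Hs. destruct (open_I a b s Hs) as [r [Hr Hb]].
  destruct SC as [Cx [Cy _]].
  assert (Dx : ex_derive x s) by (exact (proj1 (Cx s Hs) 1%nat ltac:(lia))).
  assert (Dy : ex_derive y s) by (exact (proj1 (Cy s Hs) 1%nat ltac:(lia))).
  set (D := cross e1 e2) in *.
  set (T := fun r => ((x r - fst c) * snd e2 - (y r - snd c) * fst e2) / D).
  assert (Lx : locally s (fun r => x r = fst c + T r * fst e1 + T r ^ 2 * fst e2)).
  { exists (mkposreal r Hr). intros u Hu. apply ball_abs in Hu. simpl in Hu.
    pose proof (Xp_par u (Hb u Hu)) as E. unfold Xp, ppar, tau, T in *; simpl in *.
    injection E; intros _ E1. rewrite E1 at 1. unfold cross, psub; simpl. reflexivity. }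
  assert (Ly : locally s (fun r => y r = snd c + T r * snd e1 + T r ^ 2 * snd e2)).
  { exists (mkposreal r Hr). intros u Hu. apply ball_abs in Hu. simpl in Hu.
    pose proof (Xp_par u (Hb u Hu)) as E. unfold Xp, ppar, tau, T in *; simpl in *.
    injection E; intros E2 _. rewrite E2 at 1. unfold cross, psub; simpl. reflexivity. }
  set (k := (Derive x s * snd e2 - Derive y s * fst e2) / D).
  assert (DT : is_derive T s k).
  { unfold T, k. auto_derive. repeat split; auto. eta_fix. field. auto. }
  assert (Ex : Derive x s = k * (fst e1 + 2 * T s * fst e2)).
  { rewrite (Derive_ext_loc _ _ _ Lx). 
    apply is_derive_unique. auto_derive. repeat split; exists k; exact DT. eta_fix. rewrite (is_derive_unique _ _ _ DT). ring. }
  assert (Ey : Derive y s = k * (snd e1 + 2 * T s * snd e2)).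
  { rewrite (Derive_ext_loc _ _ _ Ly). 
    apply is_derive_unique. auto_derive. repeat split; exists k; exact DT. eta_fix. rewrite (is_derive_unique _ _ _ DT). ring. }
  unfold Tan, tdir, tau, Xp. fold D.
  replace (cross (Derive x s, Derive y s) e2 / D) with k by (unfold k, cross; simpl; reflexivity).
  replace (cross (psub (x s, y s) c) e2 / D) with (T s) by (unfold T, cross, psub; simpl; reflexivity).
  rewrite <- Ex, <- Ey. reflexivity.
Qed.

Lemma k_nz s : in_I a b s -> cross (Tan x y s) e2 / cross e1 e2 <> 0.
Proof.
  intros Hs E. pose proof (Tan_par s Hs) as T. rewrite E in T. unfold Tan, tdir in T.
  injection T; intros E2 E1. pose proof (AL s Hs). rewrite E1, E2 in H. lra.
Qed.

Lemma tau_neq s t : in_I a b s -> in_I a b t -> Xp x y s <> Xp x y t -> tau s <> tau t.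
Proof. intros Hs Ht Hn E. apply Hn. rewrite (Xp_par s Hs), (Xp_par t Ht), E. reflexivity. Qed.

Lemma P3_UT s h1 h2 : in_I a b s -> in_I a b (s + h1) -> in_I a b (s + h2) ->
  Xp x y s <> Xp x y (s + h1) -> Xp x y s <> Xp x y (s + h2) -> Xp x y (s + h1) <> Xp x y (s + h2) ->
  Uarea x y s h1 h2 = / 2 * Tarea x y s h1 h2 /\ 0 < Tarea x y s h1 h2.
Proof.
  intros H0 H1 H2 N01 N02 N12.
  pose proof (tau_neq _ _ H0 H1 N01) as D01. pose proof (tau_neq _ _ H0 H2 N02) as D02.
  pose proof (tau_neq _ _ H1 H2 N12) as D12.
  pose proof (k_nz s H0) as K0. pose proof (k_nz (s + h1) H1) as K1. pose proof (k_nz (s + h2) H2) as K2.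
  pose proof (Tan_par s H0) as T0. pose proof (Tan_par (s + h1) H1) as T1. pose proof (Tan_par (s + h2) H2) as T2.
  pose proof (Xp_par s H0) as X0. pose proof (Xp_par (s + h1) H1) as X1. pose proof (Xp_par (s + h2) H2) as X2.
  set (k0 := cross (Tan x y s) e2 / cross e1 e2) in *.
  set (k1 := cross (Tan x y (s + h1)) e2 / cross e1 e2) in *.
  set (k2 := cross (Tan x y (s + h2)) e2 / cross e1 e2) in *.
  set (t0 := tau s) in *. set (t1 := tau (s + h1)) in *. set (t2 := tau (s + h2)) in *.
  unfold Uarea, Tarea. rewrite T0, T1, T2, X0, X1, X2.
  split. apply par_U; auto.
  rewrite par_T. apply Rmult_lt_0_compat; [|lra]. apply Rabs_pos_lt.
  repeat (match goal with |- _ * _ <> 0 => apply Rmult_integral_contrapositive; split end); auto;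
  intro E; [apply D01 | apply D02 | apply D12]; lra.
Qed.

End Par3.

Lemma exists_pt a b : Rbar_lt a b -> exists s, in_I a b s.
Proof.
  intros H. destruct a as [a| |]; destruct b as [b| |]; simpl in H; try contradiction.
  - exists ((a + b) / 2). split; simpl; lra.
  - exists (a + 1). split; simpl; auto; lra.
  - exists (b - 1). split; simpl; auto; lra.
  - exists 0. split; simpl; auto.
Qed.

Lemma P3_of_ODE a b x y : Rbar_lt a b -> strictly_convex a b x y -> arclength_param a b x y ->
  (forall s, in_I a b s -> exists e, 0 < e /\ forall h, h <> 0 -> Rabs h < e -> RR x y s h = 1 / 2) ->
  open_part_of_parabola a b x y.
Proof.
  intros Hab SC AL ODE. destruct (exists_pt a b Hab) as [s0 Hs0].
  exists (Xp x y s0), (Tan x y s0), (pe2 x y s0). split.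
  apply (nondeg a b x y SC AL s0 Hs0).
  intros s Hs. apply (global a b x y SC AL ODE s0 Hs0 s Hs).
Qed.

Theorem corollary8 (a b : Rbar) (x y : R -> R) :
  Rbar_lt a b ->
  strictly_convex a b x y ->
  arclength_param a b x y ->
  let P1 := exists lam mu : R -> R, forall s, in_I a b s ->
              for_small_h a b x y s (fun h1 h2 =>
                Uarea x y s h1 h2 = lam s * Rpower (Tarea x y s h1 h2) (mu s)) in
  let P2 := forall s, in_I a b s ->
              for_small_h a b x y s (fun h1 h2 =>
                Uarea x y s h1 h2 = / 2 * Tarea x y s h1 h2) in
  let P3 := open_part_of_parabola a b x y in
  (P1 <-> P2) /\ (P2 <-> P3).
Proof.
  intros Hab SC AL P1 P2 P3.
  assert (P2P3 : P2 -> P3).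
  { intros H. apply P3_of_ODE; auto. intros s Hs. apply (ODE_P2 a b x y s); auto. }
  assert (P3P2 : P3 -> P2).
  { intros [c [e1 [e2 [HD Hon]]]] s Hs. exists 1. split. lra.
    intros h1 h2 _ _ I1 I2 N1 N2 N3.
    apply (P3_UT a b x y c e1 e2 SC AL HD Hon s h1 h2); auto. }
  assert (P1P3 : P1 -> P3).
  { intros [lam [mu H]]. apply P3_of_ODE; auto. intros s Hs.
    apply (ODE_P1 a b x y s (lam s) (mu s)); auto. }
  split; split; auto.
  intros H. destruct (P2P3 H) as [c [e1 [e2 [HD Hon]]]].
  exists (fun _ => / 2), (fun _ => 1). intros s Hs.
  destruct (H s Hs) as [d [Hd Hp]]. exists d. split; auto.
  intros h1 h2 B1 B2 I1 I2 N1 N2 N3. rewrite (Hp h1 h2 B1 B2 I1 I2 N1 N2 N3).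
  rewrite Rpower_1. reflexivity.
  apply (P3_UT a b x y c e1 e2 SC AL HD Hon s h1 h2); auto.
Qed.
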